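(* Let $n\ge 1$ and let $\omega_1,\dots,\omega_n\in\mathbb{C}$ be pairwise distinct complex numbers, none of which lies on the real segment $[0,1]$. Let $n_1,\dots,n_n\ge 1$ be integers and set $h(\omega)=\prod_{i=1}^{n}(\omega-\omega_i)^{n_i}$. For a nonnegative integer $m$ define $$g_m(\omega)=\omega^m\Big(\log\big(1-\tfrac{1}{\omega}\big)+\sum_{k=1}^{m}\frac{1}{k\,\omega^k}\Big),\qquad G_m(\omega)=\frac{g_m(\omega)}{h(\omega)},$$ where $\log$ denotes the principal branch of the logarithm (so that $g_m$, and hence $G_m$ away from the zeros of $h$, is single-valued and holomorphic on $\mathbb{C}\setminus[0,1]$). Then $$\int_0^1 \frac{x^m}{h(x)}\,dx=\sum_{i=1}^{n}\operatorname{Res}\big(G_m,\omega_i\big).$$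
   Context: $\operatorname{Res}(G,\omega_i)$ denotes the residue of the meromorphic function $G$ at the point $\omega_i$. The empty sum (for $m=0$) is $0$. *)

(* Defs.v *)
From Stdlib Require Import Reals.
From Coquelicot Require Export Coquelicot.
Open Scope R_scope.

(* finite sums / products over indices 0 <= k < n *)
Fixpoint Csum (n : nat) (f : nat -> C) : C :=
  match n with O => RtoC 0 | S k => Cplus (Csum k f) (f k) end.
Fixpoint Cprod (n : nat) (f : nat -> C) : C :=
  match n with O => RtoC 1 | S k => Cmult (Cprod k f) (f k) end.

(* principal argument, with values in (-PI, PI] (0 at z = 0) *)
Definition Carg (z : C) : R :=
  let x := fst z in let y := snd z in
  if Rlt_dec 0 x then atan (y / x)
  else if Rlt_dec x 0 then
    (if Rle_dec 0 y then atan (y / x) + PI else atan (y / x) - PI)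
  else if Rlt_dec 0 y then PI / 2
  else if Rlt_dec y 0 then - (PI / 2)
  else 0.

Definition Clog (z : C) : C := (ln (Cmod z), Carg z).

Definition Ceit (t : R) : C := (cos t, sin t).

(* [is_residue f a c]: c is the residue of f at the isolated singularity a,
   i.e. c = (1 / 2 pi i) * contour integral of f over |z - a| = r for all
   sufficiently small r > 0. *)
Definition is_residue (f : C -> C) (a c : C) : Prop :=
  exists eps : R, 0 < eps /\
    forall r : R, 0 < r < eps ->
      @is_RInt C_R_NormedModule
        (fun t : R => Cmult (f (Cplus a (Cmult (RtoC r) (Ceit t))))
                            (Cmult (Cmult (RtoC r) Ci) (Ceit t)))
        0 (2 * PI) (Cmult (Cmult (RtoC (2 * PI)) Ci) c).

Definition hpoly (n : nat) (w : nat -> C) (N : nat -> nat) (z : C) : C :=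
  Cprod n (fun i => Cpow (Cminus z (w i)) (N i)).

Definition g_m (m : nat) (z : C) : C :=
  Cmult (Cpow z m)
    (Cplus (Clog (Cminus (RtoC 1) (Cinv z)))
           (Csum m (fun k => Cinv (Cmult (RtoC (INR (S k))) (Cpow z (S k)))))).

Definition G_m (m n : nat) (w : nat -> C) (N : nat -> nat) (z : C) : C :=
  Cdiv (g_m m z) (hpoly n w N z).

(* Main.v *)
Require Import Defs.
From Stdlib Require Import Reals Lra Lia List ClassicalEpsilon Classical FunctionalExtensionality.
From Coquelicot Require Import Coquelicot.
Import ListNotations.
Open Scope R_scope.


Lemma is_derive_eq (f : R -> R) x l l' : is_derive f x l -> l = l' -> is_derive f x l'.
Proof. intros H ->; exact H. Qed.


Lemma Rder_const (c t : R) : is_derive (fun _ => c) t 0.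
Proof. apply (is_derive_const (K:=R_AbsRing) (V:=R_NormedModule)). Qed.
Lemma Rder_id (t : R) : is_derive (fun s => s) t 1.
Proof. apply (is_derive_id (K:=R_AbsRing)). Qed.
Lemma Rder_plus (f g : R -> R) t df dg : is_derive f t df -> is_derive g t dg ->
  is_derive (fun s => f s + g s) t (df + dg).
Proof. intros; apply (is_derive_plus (K:=R_AbsRing) (V:=R_NormedModule)); auto. Qed.
Lemma Rder_opp (f : R -> R) t df : is_derive f t df ->
  is_derive (fun s => - f s) t (- df).
Proof. intros; apply (is_derive_opp (K:=R_AbsRing) (V:=R_NormedModule)); auto. Qed.
Lemma Rder_minus (f g : R -> R) t df dg : is_derive f t df -> is_derive g t dg ->
  is_derive (fun s => f s - g s) t (df - dg).
Proof. intros; apply (is_derive_minus (K:=R_AbsRing) (V:=R_NormedModule)); auto. Qed.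

Ltac rq := match goal with |- @eq _ ?a ?b => change (@eq R a b) end; cbv beta.

Definition cder (f : R -> C) (t : R) (d : C) :=
  is_derive (fun s => Re (f s)) t (Re d) /\ is_derive (fun s => Im (f s)) t (Im d).
Definition ccont {U : UniformSpace} (f : U -> C) (x : U) :=
  continuous (fun s => Re (f s)) x /\ continuous (fun s => Im (f s)) x.

Lemma FTC_C (F dF : R -> C) a b :
  (forall t, a <= t <= b -> cder F t (dF t)) ->
  (forall t, a <= t <= b -> ccont dF t) -> a <= b ->
  @is_RInt C_R_NormedModule dF a b (Cminus (F b) (F a)).
Proof.
  intros Hd Hc Hab.
  apply (@is_RInt_fct_extend_pair R_NormedModule R_NormedModule dF a b
     (Re (F b) - Re (F a)) (Im (F b) - Im (F a))).
  - apply (is_RInt_derive (fun s => Re (F s))).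
    + intros x Hx. rewrite Rmin_left in Hx by lra. rewrite Rmax_right in Hx by lra.
      apply Hd; lra.
    + intros x Hx. rewrite Rmin_left in Hx by lra. rewrite Rmax_right in Hx by lra.
      apply Hc; lra.
  - apply (is_RInt_derive (fun s => Im (F s))).
    + intros x Hx. rewrite Rmin_left in Hx by lra. rewrite Rmax_right in Hx by lra.
      apply Hd; lra.
    + intros x Hx. rewrite Rmin_left in Hx by lra. rewrite Rmax_right in Hx by lra.
      apply Hc; lra.
Qed.

Lemma cder_ext (f g : R -> C) t d : (forall s, f s = g s) -> cder f t d -> cder g t d.
Proof.
  intros E [H1 H2]; split.
  - apply (is_derive_ext (fun s => Re (f s))); [intros; now rewrite E|exact H1].
  - apply (is_derive_ext (fun s => Im (f s))); [intros; now rewrite E|exact H2].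
Qed.

Lemma cder_ext_loc (f g : R -> C) t d : locally t (fun s => f s = g s) -> cder f t d -> cder g t d.
Proof.
  intros E [H1 H2]; split.
  - apply (is_derive_ext_loc (fun s => Re (f s))); [|exact H1].
    apply (filter_imp (fun s => f s = g s)); [intros; now rewrite H|exact E].
  - apply (is_derive_ext_loc (fun s => Im (f s))); [|exact H2].
    apply (filter_imp (fun s => f s = g s)); [intros; now rewrite H|exact E].
Qed.

Lemma cder_eq f t d d' : cder f t d -> d = d' -> cder f t d'.
Proof. intros H ->; exact H. Qed.

Lemma cder_const (c : C) t : cder (fun _ => c) t (RtoC 0).
Proof. split; apply Rder_const. Qed.

Lemma cder_RtoC t : cder (fun s => RtoC s) t (RtoC 1).
Proof.
  split; simpl.
  - apply Rder_id.
  - apply Rder_const.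
Qed.

Lemma cder_plus f g t df dg : cder f t df -> cder g t dg ->
  cder (fun s => Cplus (f s) (g s)) t (Cplus df dg).
Proof.
  intros [F1 F2] [G1 G2]; split; simpl.
  - apply Rder_plus; auto.
  - apply Rder_plus; auto.
Qed.

Lemma cder_opp f t df : cder f t df -> cder (fun s => Copp (f s)) t (Copp df).
Proof.
  intros [F1 F2]; split; simpl.
  - apply Rder_opp; auto.
  - apply Rder_opp; auto.
Qed.

Lemma cder_minus f g t df dg : cder f t df -> cder g t dg ->
  cder (fun s => Cminus (f s) (g s)) t (Cminus df dg).
Proof. intros; apply cder_plus; auto; now apply cder_opp. Qed.

Lemma Rmult_der (f g : R -> R) t df dg : is_derive f t df -> is_derive g t dg ->
  is_derive (fun s => f s * g s) t (df * g t + f t * dg).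
Proof.
  intros H1 H2.
  apply (is_derive_mult (K:=R_AbsRing) f g t df dg H1 H2).
  intros; apply Rmult_comm.
Qed.

Lemma cder_mult f g t df dg : cder f t df -> cder g t dg ->
  cder (fun s => Cmult (f s) (g s)) t (Cplus (Cmult df (g t)) (Cmult (f t) dg)).
Proof.
  intros [F1 F2] [G1 G2]; split; simpl.
  - eapply is_derive_eq.
    + apply Rder_minus; apply Rmult_der; eauto.
    + unfold Re, Im; simpl; ring.
  - eapply is_derive_eq.
    + apply Rder_plus; apply Rmult_der; eauto.
    + unfold Re, Im; simpl; ring.
Qed.

Lemma cder_scal_l (c : C) f t df : cder f t df -> cder (fun s => Cmult c (f s)) t (Cmult c df).
Proof.
  intros H. eapply cder_eq. apply cder_mult; [apply cder_const|exact H].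
  apply injective_projections; simpl; ring.
Qed.

Lemma cder_inv f t df : cder f t df -> f t <> RtoC 0 ->
  cder (fun s => Cinv (f s)) t (Cdiv (Copp df) (Cmult (f t) (f t))).
Proof.
  intros [F1 F2] Hnz.
  assert (Hq : Re (f t) ^ 2 + Im (f t) ^ 2 <> 0).
  { intro E. apply Hnz. destruct (f t) as [x y]. simpl in E.
    assert (x = 0) by nra. assert (y = 0) by nra. subst. reflexivity. }
  assert (Dq : is_derive (fun s => Re (f s) * Re (f s) + Im (f s) * Im (f s)) t
     (2 * (Re (f t) * Re df + Im (f t) * Im df))).
  { eapply is_derive_eq.
    apply Rder_plus; apply Rmult_der; eauto.
    cbv beta; rq; ring. }
  assert (Dinv := is_derive_inv _ _ _ Dq). cbv beta in Dinv.
  assert (Hq' : Re (f t) * Re (f t) + Im (f t) * Im (f t) <> 0) by (intro; apply Hq; nra).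
  specialize (Dinv Hq').
  split.
  - apply (is_derive_ext (fun s => Re (f s) * / (Re (f s) * Re (f s) + Im (f s) * Im (f s)))).
    { intro s. unfold Cinv, Re, Im; destruct (f s) as [a b]; simpl; unfold Rdiv; repeat rewrite Rmult_1_r; ring. }
    eapply is_derive_eq. apply Rmult_der. apply F1. apply Dinv.
    unfold Re, Im in *; simpl in *; destruct (f t) as [x y]; destruct df as [dx dy]; simpl in *.
    field. nra.
  - apply (is_derive_ext (fun s => - (Im (f s) * / (Re (f s) * Re (f s) + Im (f s) * Im (f s))))).
    { intro s. unfold Cinv, Re, Im; destruct (f s) as [a b]; simpl; unfold Rdiv; repeat rewrite Rmult_1_r; ring. }
    eapply is_derive_eq.
    apply Rder_opp.
    apply Rmult_der. apply F2. apply Dinv.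
    unfold Re, Im in *; simpl in *; destruct (f t) as [x y]; destruct df as [dx dy]; simpl in *.
    field. nra.
Qed.



Lemma cder_pow f t df k : cder f t df ->
  cder (fun s => Cpow (f s) k) t (Cmult (RtoC (INR k)) (Cmult (Cpow (f t) (pred k)) df)).
Proof.
  intros H. induction k as [|k IH].
  - apply (cder_ext (fun _ => RtoC 1)). reflexivity.
    apply (cder_eq _ _ _ _ (cder_const (RtoC 1) t)).
    change (INR 0) with 0.
    generalize (Cmult (Cpow (f t) (pred 0)) df). intro p.
    apply injective_projections; simpl; ring.
  - apply (cder_ext (fun s => Cmult (f s) (Cpow (f s) k))). intro s; symmetry; apply Cpow_S.
    apply (cder_eq _ _ _ _ (cder_mult _ _ _ _ _ H IH)).
    destruct k as [|k].
    + change (Cpow (f t) 0) with (RtoC 1). simpl pred. change (INR 1) with 1. change (INR 0) with 0.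
      generalize (f t) df. intros u v. 
      apply injective_projections; simpl; ring.
    + rewrite (S_INR (S k)). simpl pred. rewrite Cpow_S.
      generalize (Cpow (f t) k) (f t) df (INR (S k)). intros p u v q.
      apply injective_projections; simpl; ring.
Qed.
Lemma cder_Ceit t : cder Ceit t (Cmult Ci (Ceit t)).
Proof.
  split; unfold Ceit, Re, Im; simpl.
  - eapply is_derive_eq. apply is_derive_cos. rq; ring.
  - eapply is_derive_eq. apply is_derive_sin. rq; ring.
Qed.

Section RC.
Context {U : UniformSpace}.
Lemma Rc_plus (f g : U -> R) x : continuous f x -> continuous g x -> continuous (fun s => f s + g s) x.
Proof. intros; apply (continuous_plus (V:=R_NormedModule)); auto. Qed.
Lemma Rc_opp (f : U -> R) x : continuous f x -> continuous (fun s => - f s) x.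
Proof. intros; apply (continuous_opp (V:=R_NormedModule)); auto. Qed.
Lemma Rc_minus (f g : U -> R) x : continuous f x -> continuous g x -> continuous (fun s => f s - g s) x.
Proof. intros; apply (continuous_minus (V:=R_NormedModule)); auto. Qed.
Lemma Rc_mult (f g : U -> R) x : continuous f x -> continuous g x -> continuous (fun s => f s * g s) x.
Proof. intros; apply (continuous_mult (K:=R_AbsRing)); auto. Qed.
Lemma Rc_const (c : R) x : continuous (fun _ : U => c) x.
Proof. apply continuous_const. Qed.
Lemma Rc_inv (f : U -> R) x : continuous f x -> f x <> 0 -> continuous (fun s => / f s) x.
Proof.
  intros H Hn. apply (continuous_comp f (fun y => / y)). exact H.
  apply continuous_Rinv. exact Hn.
Qed.

Lemma ccont_ext_loc (f g : U -> C) x : locally x (fun s => f s = g s) -> ccont f x -> ccont g x.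
Proof.
  intros E [H1 H2]; split.
  - apply (continuous_ext_loc _ (fun s => Re (f s))); [|exact H1].
    apply (filter_imp (fun s => f s = g s)); [intros; now rewrite H|exact E].
  - apply (continuous_ext_loc _ (fun s => Im (f s))); [|exact H2].
    apply (filter_imp (fun s => f s = g s)); [intros; now rewrite H|exact E].
Qed.
Lemma ccont_ext (f g : U -> C) x : (forall s, f s = g s) -> ccont f x -> ccont g x.
Proof. intros E; apply ccont_ext_loc. apply filter_forall. exact E. Qed.

Lemma ccont_const (c : C) x : ccont (fun _ : U => c) x.
Proof. split; apply Rc_const. Qed.
Lemma ccont_RtoC (g : U -> R) x : continuous g x -> ccont (fun s => RtoC (g s)) x.
Proof. intros H; split; simpl; [exact H| apply Rc_const]. Qed.
Lemma ccont_plus (f g : U -> C) x : ccont f x -> ccont g x -> ccont (fun s => Cplus (f s) (g s)) x.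
Proof. intros [F1 F2] [G1 G2]; split; simpl; apply Rc_plus; auto. Qed.
Lemma ccont_opp (f : U -> C) x : ccont f x -> ccont (fun s => Copp (f s)) x.
Proof. intros [F1 F2]; split; simpl; apply Rc_opp; auto. Qed.
Lemma ccont_minus (f g : U -> C) x : ccont f x -> ccont g x -> ccont (fun s => Cminus (f s) (g s)) x.
Proof. intros; apply ccont_plus; auto; apply ccont_opp; auto. Qed.
Lemma ccont_mult (f g : U -> C) x : ccont f x -> ccont g x -> ccont (fun s => Cmult (f s) (g s)) x.
Proof.
  intros [F1 F2] [G1 G2]; split; simpl.
  - apply Rc_minus; apply Rc_mult; auto.
  - apply Rc_plus; apply Rc_mult; auto.
Qed.
Lemma ccont_inv (f : U -> C) x : ccont f x -> f x <> RtoC 0 -> ccont (fun s => Cinv (f s)) x.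
Proof.
  intros [F1 F2] Hnz.
  assert (Hq : Re (f x) * Re (f x) + Im (f x) * Im (f x) <> 0).
  { intro E. apply Hnz. unfold Re, Im in E. destruct (f x) as [a b]. simpl in E.
    assert (a = 0) by nra. assert (b = 0) by nra. subst. reflexivity. }
  split.
  - apply (continuous_ext (fun s => Re (f s) * / (Re (f s) * Re (f s) + Im (f s) * Im (f s)))).
    { intro s. unfold Cinv, Re, Im; destruct (f s) as [a b]; simpl; unfold Rdiv; repeat rewrite Rmult_1_r; ring. }
    apply Rc_mult; auto. apply Rc_inv; auto. apply Rc_plus; apply Rc_mult; auto.
  - apply (continuous_ext (fun s => - (Im (f s) * / (Re (f s) * Re (f s) + Im (f s) * Im (f s))))).
    { intro s. unfold Cinv, Re, Im; destruct (f s) as [a b]; simpl; unfold Rdiv; repeat rewrite Rmult_1_r; ring. }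
    apply Rc_opp. apply Rc_mult; auto. apply Rc_inv; auto. apply Rc_plus; apply Rc_mult; auto.
Qed.
Lemma ccont_pow (f : U -> C) x k : ccont f x -> ccont (fun s => Cpow (f s) k) x.
Proof.
  intros H; induction k as [|k IH].
  - apply ccont_const.
  - apply (ccont_ext (fun s => Cmult (f s) (Cpow (f s) k))).
    intro; symmetry; apply Cpow_S. apply ccont_mult; auto.
Qed.
Lemma ccont_div (f g : U -> C) x : ccont f x -> ccont g x -> g x <> RtoC 0 -> ccont (fun s => Cdiv (f s) (g s)) x.
Proof. intros; apply ccont_mult; auto; apply ccont_inv; auto. Qed.
End RC.

Lemma cder_ccont f t d : cder f t d -> ccont f t.
Proof.
  intros [H1 H2]; split;
  apply (ex_derive_continuous (K:=R_AbsRing) (V:=R_NormedModule)); eexists; eauto.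
Qed.

Lemma ccont_Ceit t : ccont Ceit t.
Proof. exact (cder_ccont _ _ _ (cder_Ceit t)). Qed.


Lemma atan_inv_neg v : v < 0 -> atan (/ v) = - (PI / 2) - atan v.
Proof.
  intros H. replace (/ v) with (- / (- v)) by (field; lra).
  rewrite atan_opp, atan_inv by lra. rewrite atan_opp. lra.
Qed.

Lemma Carg_C1 (z : C) : 0 < fst z -> Carg z = atan (snd z / fst z).
Proof. intros H. unfold Carg. destruct (Rlt_dec 0 (fst z)); [reflexivity|lra]. Qed.

Lemma Carg_C2 (z : C) : 0 < snd z -> Carg z = PI / 2 - atan (fst z / snd z).
Proof.
  intros H. destruct z as [x y]; simpl in *. unfold Carg; simpl.
  destruct (Rlt_dec 0 x) as [Hx|Hx].
  - replace (y / x) with (/ (x / y)) by (field; lra). rewrite atan_inv. reflexivity.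
    apply Rdiv_lt_0_compat; lra.
  - destruct (Rlt_dec x 0) as [Hx'|Hx'].
    + destruct (Rle_dec 0 y); [|lra].
      replace (y / x) with (/ (x / y)) by (field; lra). rewrite atan_inv_neg.
      lra. apply Rdiv_neg_pos; lra.
    + assert (x = 0) by lra. subst. destruct (Rlt_dec 0 y); [|lra].
      replace (0 / y) with 0 by (field; lra). rewrite atan_0. lra.
Qed.

Lemma Carg_C3 (z : C) : snd z < 0 -> Carg z = - (PI / 2) - atan (fst z / snd z).
Proof.
  intros H. destruct z as [x y]; simpl in *. unfold Carg; simpl.
  destruct (Rlt_dec 0 x) as [Hx|Hx].
  - replace (y / x) with (/ (x / y)) by (field; lra). rewrite atan_inv_neg. reflexivity.
    apply Rdiv_pos_neg; lra.
  - destruct (Rlt_dec x 0) as [Hx'|Hx'].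
    + destruct (Rle_dec 0 y); [lra|].
      replace (y / x) with (/ (x / y)) by (field; lra). rewrite atan_inv.
      lra. apply Rdiv_neg_neg; lra.
    + assert (x = 0) by lra. subst. destruct (Rlt_dec 0 y); [lra|].
      destruct (Rlt_dec y 0); [|lra].
      replace (0 / y) with 0 by (field; lra). rewrite atan_0. lra.
Qed.

Lemma Rder_comp (f g : R -> R) t dg df : is_derive g t dg -> is_derive f (g t) df ->
  is_derive (fun s => f (g s)) t (dg * df).
Proof. intros H1 H2. apply (is_derive_comp f g t df dg H2 H1). Qed.

Lemma Rder_inv (f : R -> R) t df : is_derive f t df -> f t <> 0 ->
  is_derive (fun s => / f s) t (- df / (f t ^ 2)).
Proof. intros; apply is_derive_inv; auto. Qed.

Lemma Rder_div (f g : R -> R) t df dg : is_derive f t df -> is_derive g t dg -> g t <> 0 ->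
  is_derive (fun s => f s / g s) t ((df * g t - f t * dg) / (g t ^ 2)).
Proof.
  intros H1 H2 Hn. eapply is_derive_eq. apply Rmult_der. exact H1. apply Rder_inv; eauto.
  rq; field. auto.
Qed.

Lemma Rder_atan_div (X Y : R -> R) t dX dY : is_derive X t dX -> is_derive Y t dY -> X t <> 0 ->
  is_derive (fun s => atan (Y s / X s)) t ((X t * dY - Y t * dX) / (X t ^ 2 + Y t ^ 2)).
Proof.
  intros HX HY Hn. eapply is_derive_eq.
  apply Rder_comp. apply Rder_div; eauto. apply is_derive_atan.
  rq; unfold Rsqr. field. split; auto. intro E.
  assert (X t ^ 2 > 0) by (apply pow2_gt_0; auto).
  assert (Y t ^ 2 >= 0) by (apply Rle_ge; apply pow2_ge_0). lra.
Qed.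

Lemma cder_Clog u t du : cder u t du -> (0 < Re (u t) \/ Im (u t) <> 0) ->
  cder (fun s => Clog (u s)) t (Cdiv du (u t)).
Proof.
  intros H Hreg. pose proof (cder_ccont _ _ _ H) as [CX CY].
  destruct H as [DX DY].
  set (X := fun s => Re (u s)) in *. set (Y := fun s => Im (u s)) in *.
  assert (Hq : 0 < X t ^ 2 + Y t ^ 2).
  { destruct Hreg as [Hr|Hr].
    - assert (X t ^ 2 > 0) by (apply pow2_gt_0; unfold X; lra).
      assert (Y t ^ 2 >= 0) by (apply Rle_ge; apply pow2_ge_0). lra.
    - assert (Y t ^ 2 > 0) by (apply pow2_gt_0; unfold Y; auto).
      assert (X t ^ 2 >= 0) by (apply Rle_ge; apply pow2_ge_0). lra. }
  split.
  -
    apply (is_derive_ext (fun s => ln (sqrt (X s * X s + Y s * Y s)))).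
    { intro s. unfold X, Y, Clog, Cmod, Re, Im. simpl. f_equal. f_equal. ring. }
    assert (Dq : is_derive (fun s => X s * X s + Y s * Y s) t (2 * X t * Re du + 2 * Y t * Im du)).
    { eapply is_derive_eq. apply Rder_plus; apply Rmult_der; eauto.
      rq; ring. }
    assert (Hq2 : 0 < X t * X t + Y t * Y t) by nra.
    eapply is_derive_eq.
    + apply Rder_comp. apply is_derive_sqrt. exact Dq. exact Hq2.
      apply is_derive_ln. apply sqrt_lt_R0. exact Hq2.
    + rq. revert Hq2. unfold Cdiv, Cinv, X, Y, Re, Im. simpl.
      destruct (u t) as [x y]; destruct du as [dx dy]; simpl. intro Hq2.
      assert (Hs : sqrt (x * x + y * y) * sqrt (x * x + y * y) = x * x + y * y).
      { apply sqrt_sqrt. lra. }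
      assert (0 < sqrt (x * x + y * y)) by (apply sqrt_lt_R0; lra).
      assert (E : (2 * x * dx + 2 * y * dy) / (2 * sqrt (x * x + y * y)) * / sqrt (x * x + y * y)
                = (2 * x * dx + 2 * y * dy) / (2 * (sqrt (x * x + y * y) * sqrt (x * x + y * y)))) by (field; lra).
      rewrite E, Hs. rewrite !Rmult_1_r. field. lra.

  -
    change (is_derive (fun s => Carg (u s)) t (Im (Cdiv du (u t)))).
    assert (Htarget : Im (Cdiv du (u t)) = (X t * Im du - Y t * Re du) / (X t ^ 2 + Y t ^ 2)).
    { revert Hq. unfold Cdiv, Cinv, X, Y, Re, Im. destruct (u t) as [x y]; destruct du as [dx dy]; simpl.
      intro Hq. field. lra. }
    rewrite Htarget.
    destruct (Rlt_dec 0 (X t)) as [Hx|Hx].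
    + apply (is_derive_ext_loc (fun s => atan (Y s / X s))).
      { assert (Hl : locally t (fun s => 0 < X s)).
        { apply (continuous_comp X (fun v => v) t) in CX; [|apply continuous_id].
          destruct (CX (fun v => 0 < v)) as [e He]. 
          - exists (mkposreal _ Hx). intros v Hv. unfold ball in Hv; simpl in Hv.
            unfold AbsRing_ball, abs, minus, plus, opp in Hv; simpl in Hv.
            apply Rabs_lt_between in Hv. lra.
          - exists e. exact He. }
        apply (filter_imp (fun s => 0 < X s)); [|exact Hl].
        intros s Hs. symmetry. apply Carg_C1. exact Hs. }
      apply Rder_atan_div; auto. lra.
    + assert (HY : Y t <> 0) by (destruct Hreg; [unfold X in Hx; lra|auto]).
      destruct (Rlt_dec 0 (Y t)) as [Hy|Hy].
      * apply (is_derive_ext_loc (fun s => PI / 2 - atan (X s / Y s))).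
        { assert (Hl : locally t (fun s => 0 < Y s)).
          { destruct (CY (fun v => 0 < v)) as [e He].
            - exists (mkposreal _ Hy). intros v Hv. unfold ball in Hv; simpl in Hv.
              unfold AbsRing_ball, abs, minus, plus, opp in Hv; simpl in Hv.
              apply Rabs_lt_between in Hv. unfold Y in *; lra.
            - exists e. exact He. }
          apply (filter_imp (fun s => 0 < Y s)); [|exact Hl].
          intros s Hs. symmetry. apply Carg_C2. exact Hs. }
        eapply is_derive_eq. apply Rder_minus. apply Rder_const. apply (Rder_atan_div Y X t (Im du) (Re du)); auto.
        rq; field. lra.
      * assert (Hy' : Y t < 0) by lra.
        apply (is_derive_ext_loc (fun s => - (PI / 2) - atan (X s / Y s))).
        { assert (Hl : locally t (fun s => Y s < 0)).
          { destruct (CY (fun v => v < 0)) as [e He].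
            - exists (mkposreal _ (Ropp_0_gt_lt_contravar _ Hy')). intros v Hv. unfold ball in Hv; simpl in Hv.
              unfold AbsRing_ball, abs, minus, plus, opp in Hv; simpl in Hv.
              apply Rabs_lt_between in Hv. unfold Y in *; lra.
            - exists e. exact He. }
          apply (filter_imp (fun s => Y s < 0)); [|exact Hl].
          intros s Hs. symmetry. apply Carg_C3. exact Hs. }
        eapply is_derive_eq. apply Rder_minus. apply Rder_const. apply (Rder_atan_div Y X t (Im du) (Re du)); auto.
        rq; field. lra.
Qed.


Definition circ (a : C) (r t : R) : C := Cplus a (Cmult (RtoC r) (Ceit t)).
Definition dcirc (r t : R) : C := Cmult (Cmult (RtoC r) Ci) (Ceit t).
Definition cint (F : C -> C) (a : C) (r : R) (v : C) :=
  @is_RInt C_R_NormedModule (fun t => Cmult (F (circ a r t)) (dcirc r t)) 0 (2 * PI) v.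
Definition tpi : C := Cmult (RtoC (2 * PI)) Ci.

Lemma Cmod_Ceit t : Cmod (Ceit t) = 1.
Proof.
  unfold Cmod, Ceit; cbn [fst snd]. rewrite <- sqrt_1. f_equal.
  pose proof (sin2_cos2 t). unfold Rsqr in H. nra.
Qed.

Lemma cder_circ a r t : cder (circ a r) t (dcirc r t).
Proof.
  unfold circ.
  apply (cder_eq _ _ _ _ (cder_plus _ _ _ _ _ (cder_const a t) (cder_scal_l (RtoC r) _ _ _ (cder_Ceit t)))).
  unfold dcirc. apply injective_projections; simpl; ring.
Qed.

Lemma ccont_circ a r t : ccont (circ a r) t.
Proof. exact (cder_ccont _ _ _ (cder_circ a r t)). Qed.
Lemma ccont_dcirc r t : ccont (dcirc r) t.
Proof. unfold dcirc. apply ccont_mult. apply ccont_const. apply ccont_Ceit. Qed.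

Lemma Cminus_diag (x : C) : Cminus x x = RtoC 0.
Proof. apply injective_projections; simpl; ring. Qed.

Lemma circ_exact (F P : C -> C) a r :
  (forall t, 0 <= t <= 2 * PI -> cder (fun s => P (circ a r s)) t (Cmult (F (circ a r t)) (dcirc r t))) ->
  (forall t, 0 <= t <= 2 * PI -> ccont (fun s => Cmult (F (circ a r s)) (dcirc r s)) t) ->
  cint F a r (RtoC 0).
Proof.
  intros Hd Hc. unfold cint.
  assert (E : circ a r (2 * PI) = circ a r 0).
  { unfold circ, Ceit. rewrite cos_2PI, sin_2PI, cos_0, sin_0. reflexivity. }
  rewrite <- (Cminus_diag (P (circ a r 0))). rewrite <- E at 1.
  apply (FTC_C (fun s => P (circ a r s))); auto.
  pose proof PI_RGT_0; lra.
Qed.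

Definition avoid (a b : C) (r : R) := (b = a /\ 0 < r) \/ (0 <= r /\ r < Cmod (Cminus b a)).

Lemma circ_minus a r t : Cminus (circ a r t) a = Cmult (RtoC r) (Ceit t).
Proof. unfold circ. apply injective_projections; simpl; ring. Qed.

Lemma Cminus_0_eq (x y : C) : Cminus x y = RtoC 0 -> x = y.
Proof.
  intros E. destruct x as [x1 x2], y as [y1 y2].
  injection E; intros E2 E1. simpl in *. f_equal; lra.
Qed.

Lemma circ_ne a b r t : avoid a b r -> Cminus (circ a r t) b <> RtoC 0.
Proof.
  intros [[-> Hr]|[Hr Hb]] E.
  - rewrite circ_minus in E. apply (f_equal Cmod) in E.
    rewrite Cmod_mult, Cmod_Ceit, Cmod_R, Cmod_0 in E. rewrite Rabs_pos_eq in E; lra.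
  - assert (Cminus b a = Cmult (RtoC r) (Ceit t)).
    { rewrite <- (circ_minus a r t). apply Cminus_0_eq in E. rewrite E. reflexivity. }
    apply (f_equal Cmod) in H. rewrite Cmod_mult, Cmod_Ceit, Cmod_R in H.
    rewrite Rabs_pos_eq in H; lra.
Qed.

Lemma ccont_integrand_pow a b r k t : avoid a b r ->
  ccont (fun s => Cmult (Cinv (Cpow (Cminus (circ a r s) b) k)) (dcirc r s)) t.
Proof.
  intros Hav. apply ccont_mult; [|apply ccont_dcirc].
  apply ccont_inv. apply ccont_pow. apply ccont_minus. apply ccont_circ. apply ccont_const.
  apply Cpow_nz. apply circ_ne; auto.
Qed.

Lemma cder_circ_minus a b r t : cder (fun s => Cminus (circ a r s) b) t (dcirc r t).
Proof.
  apply (cder_eq _ _ _ _ (cder_minus _ _ _ _ _ (cder_circ a r t) (cder_const b t))).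
  apply injective_projections; simpl; ring.
Qed.

Lemma INR_S_neq0 j : RtoC (INR (S j)) <> RtoC 0.
Proof.
  intro E. apply (f_equal fst) in E. change (INR (S j) = 0) in E. revert E. apply not_0_INR. lia.
Qed.

Lemma cint_pow_ge2 a b r j : avoid a b r ->
  cint (fun z => Cinv (Cpow (Cminus z b) (S (S j)))) a r (RtoC 0).
Proof.
  intros Hav.
  apply (circ_exact _ (fun z => Cmult (Copp (Cinv (RtoC (INR (S j))))) (Cinv (Cpow (Cminus z b) (S j))))).
  - intros t _.
    pose proof (cder_pow _ _ _ (S j) (cder_circ_minus a b r t)) as H1.
    assert (Hu := circ_ne a b r t Hav).
    pose proof (cder_inv _ _ _ H1 (Cpow_nz _ (S j) Hu)) as H2.
    pose proof (cder_scal_l (Copp (Cinv (RtoC (INR (S j))))) _ _ _ H2) as H3.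
    apply (cder_eq _ _ _ _ H3).
    simpl pred. set (u := Cminus (circ a r t) b) in *.
    assert (Huj := Cpow_nz u j Hu).
    rewrite !Cpow_S.
    pose proof (INR_S_neq0 j).
    field. repeat split; auto.
  - intros t _. apply ccont_integrand_pow; auto.
Qed.

Lemma Cmod_minus_sym (x y : C) : Cmod (Cminus x y) = Cmod (Cminus y x).
Proof. rewrite <- Cmod_opp. f_equal. apply injective_projections; simpl; ring. Qed.

Lemma cint_pow1_far a b r : 0 <= r -> r < Cmod (Cminus b a) ->
  cint (fun z => Cinv (Cpow (Cminus z b) 1)) a r (RtoC 0).
Proof.
  intros Hr Hb.
  assert (Hav : avoid a b r) by (right; auto).
  assert (Hab : Cminus a b <> RtoC 0).
  { intro E. rewrite Cmod_minus_sym, E, Cmod_0 in Hb. lra. }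
  apply (circ_exact _ (fun z => Clog (Cmult (Cminus z b) (Cinv (Cminus a b))))).
  - intros t _.
    assert (Hu := circ_ne a b r t Hav).
    pose proof (cder_mult _ _ _ _ _ (cder_circ_minus a b r t) (cder_const (Cinv (Cminus a b)) t)) as H1.
    assert (Hre : 0 < Re (Cmult (Cminus (circ a r t) b) (Cinv (Cminus a b)))).
    { set (w := Cmult (Cmult (RtoC r) (Ceit t)) (Cinv (Cminus a b))).
      assert (E : Cmult (Cminus (circ a r t) b) (Cinv (Cminus a b)) = Cplus (RtoC 1) w).
      { unfold w, circ. field. auto. }
      rewrite E. 
      assert (Hw : Cmod w < 1).
      { unfold w. rewrite Cmod_mult, Cmod_mult, Cmod_Ceit, Cmod_R, Cmod_inv by auto.
        rewrite Rabs_pos_eq by lra. rewrite Cmod_minus_sym.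
        assert (0 < Cmod (Cminus b a)) by lra.
        apply (Rmult_lt_reg_r (Cmod (Cminus b a))); auto.
        field_simplify; lra. }
      pose proof (re_le_Cmod w).
      assert (- Re w <= Rabs (Re w)) by (rewrite <- Rabs_Ropp; apply Rle_abs).
      unfold Re in *. change (0 < 1 + fst w). lra. }
    pose proof (cder_Clog _ _ _ H1 (or_introl Hre)) as H2.
    apply (cder_eq _ _ _ _ H2).
    change (Cpow (Cminus (circ a r t) b) 1) with (Cmult (Cminus (circ a r t) b) (RtoC 1)).
    field. repeat split; auto.
  - intros t _. apply ccont_integrand_pow; auto.
Qed.

Lemma cint_pow1_center a r : 0 < r ->
  cint (fun z => Cinv (Cpow (Cminus z a) 1)) a r tpi.
Proof.
  intros Hr. unfold cint.
  apply (is_RInt_ext (V:=C_R_NormedModule) (fun _ => Ci)).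
  - intros t _. rewrite circ_minus. unfold dcirc.
    change (Cpow (Cmult (RtoC r) (Ceit t)) 1) with (Cmult (Cmult (RtoC r) (Ceit t)) (RtoC 1)).
    assert (Ceit t <> RtoC 0).
    { intro E. pose proof (Cmod_Ceit t). rewrite E, Cmod_0 in H. lra. }
    assert (RtoC r <> RtoC 0).
    { intro E. apply (f_equal fst) in E. simpl in E. lra. }
    match goal with |- @eq _ ?a ?b => change (@eq C a b) end. field. auto.
  - pose proof (@is_RInt_const C_R_NormedModule 0 (2*PI) Ci) as H.
    match type of H with is_RInt _ _ _ ?v => replace tpi with v; [exact H|] end.
    unfold tpi. apply injective_projections; simpl; unfold scal; simpl; unfold mult; simpl; ring.
Qed.


Fixpoint Pl (L : list C) (z : C) : C :=
  match L with nil => RtoC 1 | b :: L' => Cmult (Cminus z b) (Pl L' z) end.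

Fixpoint find_ne (b : C) (L : list C) : option C :=
  match L with nil => None | c :: L' => if Ceq_dec c b then find_ne b L' else Some c end.

Fixpoint remove1 (c : C) (L : list C) : list C :=
  match L with nil => nil | d :: L' => if Ceq_dec d c then L' else d :: remove1 c L' end.

Fixpoint vres (n : nat) (L : list C) (a : C) : C :=
  match n with O => RtoC 0 | S n' =>
    match L with nil => RtoC 0
    | b :: L' =>
      match find_ne b L' with
      | None => if Nat.eqb (length L') 0 then (if Ceq_dec b a then RtoC 1 else RtoC 0) else RtoC 0
      | Some c => Cmult (Cinv (Cminus b c))
                    (Cminus (vres n' (b :: remove1 c L') a) (vres n' (c :: remove1 c L') a))
      end
    end
  end.

Lemma find_ne_None b L : find_ne b L = None -> forall c, In c L -> c = b.
Proof.
  induction L as [|d L IH]; simpl; [tauto|].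
  destruct (Ceq_dec d b); [|discriminate]. intros H c [->|Hc]; auto.
Qed.

Lemma find_ne_Some b L c : find_ne b L = Some c -> In c L /\ c <> b.
Proof.
  induction L as [|d L IH]; simpl; [discriminate|].
  destruct (Ceq_dec d b).
  - intros H; destruct (IH H); auto.
  - intros H; injection H; intros <-; auto.
Qed.

Lemma remove1_length c L : In c L -> length (remove1 c L) = pred (length L).
Proof.
  induction L as [|d L IH]; simpl; [tauto|].
  destruct (Ceq_dec d c); auto.
  intros [->|H]; [congruence|]. simpl. rewrite IH by auto.
  destruct L; simpl in *; [tauto|reflexivity].
Qed.

Lemma remove1_In c L x : In x (remove1 c L) -> In x L.
Proof.
  induction L as [|d L IH]; simpl; [tauto|].
  destruct (Ceq_dec d c); simpl; intuition.
Qed.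

Lemma Pl_remove1 c L z : In c L -> Pl L z = Cmult (Cminus z c) (Pl (remove1 c L) z).
Proof.
  induction L as [|d L IH]; simpl; [tauto|].
  destruct (Ceq_dec d c) as [->|Hd]; auto.
  intros [->|H]; [congruence|]. simpl. rewrite IH by auto.
  rewrite !Cmult_assoc. f_equal. apply Cmult_comm.
Qed.

Lemma Pl_repeat b L z : (forall c, In c L -> c = b) -> Pl (b :: L) z = Cpow (Cminus z b) (S (length L)).
Proof.
  intros H. induction L as [|d L IH]; simpl.
  - reflexivity.
  - rewrite (H d) by (left; auto). simpl in IH. rewrite IH by (intros; apply H; right; auto).
    reflexivity.
Qed.

Lemma Cmult_integral (x y : C) : Cmult x y = RtoC 0 -> x = RtoC 0 \/ y = RtoC 0.
Proof.
  intros E. destruct (Ceq_dec x (RtoC 0)) as [Hx|Hx]; [left; auto|right].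
  replace y with (Cmult (Cinv x) (Cmult x y)) by (field; auto).
  rewrite E. apply injective_projections; simpl; ring.
Qed.

Lemma Pl_nz L z : (forall b, In b L -> Cminus z b <> RtoC 0) -> Pl L z <> RtoC 0.
Proof.
  induction L as [|b L IH]; simpl; intros H.
  - intro E. apply (f_equal fst) in E. simpl in E. lra.
  - intro E. apply Cmult_integral in E. destruct E as [E|E].
    + apply (H b); auto.
    + apply IH; auto.
Qed.


Notation CRI := (@is_RInt C_R_NormedModule).

Lemma cRI_plus f g a b u v : CRI f a b u -> CRI g a b v ->
  CRI (fun t => Cplus (f t) (g t)) a b (Cplus u v).
Proof. intros H1 H2. exact (is_RInt_plus (V:=C_R_NormedModule) _ _ _ _ _ _ H1 H2). Qed.

Lemma cRI_opp f a b u : CRI f a b u -> CRI (fun t => Copp (f t)) a b (Copp u).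
Proof. intros H1. exact (is_RInt_opp (V:=C_R_NormedModule) _ _ _ _ H1). Qed.

Lemma cRI_minus f g a b u v : CRI f a b u -> CRI g a b v ->
  CRI (fun t => Cminus (f t) (g t)) a b (Cminus u v).
Proof. intros H1 H2. apply cRI_plus; auto. apply cRI_opp; auto. Qed.

Lemma cRI_ext f g a b u : (forall t, Rmin a b < t < Rmax a b -> f t = g t) -> CRI f a b u -> CRI g a b u.
Proof. intros E H. exact (is_RInt_ext (V:=C_R_NormedModule) _ _ _ _ _ E H). Qed.

Lemma cRI_eq f a b u v : CRI f a b u -> u = v -> CRI f a b v.
Proof. intros H ->; exact H. Qed.

Lemma cRI_scal (k : C) f a b u : CRI f a b u -> CRI (fun t => Cmult k (f t)) a b (Cmult k u).
Proof.
  intros H.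
  pose proof (is_RInt_fct_extend_fst (U:=R_NormedModule) (V:=R_NormedModule) f a b u H) as H1.
  pose proof (is_RInt_fct_extend_snd (U:=R_NormedModule) (V:=R_NormedModule) f a b u H) as H2.
  apply (@is_RInt_fct_extend_pair R_NormedModule R_NormedModule).
  - simpl.
    pose proof (is_RInt_minus (V:=R_NormedModule) _ _ _ _ _ _
      (is_RInt_scal _ _ _ (fst k) _ H1) (is_RInt_scal _ _ _ (snd k) _ H2)) as H3.
    exact H3.
  - simpl.
    pose proof (is_RInt_plus (V:=R_NormedModule) _ _ _ _ _ _
      (is_RInt_scal _ _ _ (fst k) _ H2) (is_RInt_scal _ _ _ (snd k) _ H1)) as H3.
    exact H3.
Qed.

Lemma cRI_zero a b : CRI (fun _ => RtoC 0) a b (RtoC 0).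
Proof.
  pose proof (@is_RInt_const C_R_NormedModule a b (RtoC 0)) as H.
  eapply cRI_eq. exact H.
  apply injective_projections; simpl; unfold scal; simpl; unfold mult; simpl; ring.
Qed.


Lemma tpi_mult_0 : Cmult tpi (RtoC 0) = RtoC 0.
Proof. apply injective_projections; simpl; ring. Qed.
Lemma tpi_mult_1 : Cmult tpi (RtoC 1) = tpi.
Proof. apply injective_projections; simpl; ring. Qed.

Lemma cint_Pl n : forall L a r, length L = n -> L <> nil -> (forall b, In b L -> avoid a b r) ->
  cint (fun z => Cinv (Pl L z)) a r (Cmult tpi (vres n L a)).
Proof.
  induction n as [|n IH]; intros L a r HL Hnil Hav.
  { destruct L; simpl in HL; [congruence|discriminate]. }
  destruct L as [|b L']; [congruence|]. simpl in HL. injection HL; intro HL'.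
  simpl vres. destruct (find_ne b L') as [c|] eqn:Hf.
  - destruct (find_ne_Some _ _ _ Hf) as [Hc Hcb].
    set (L1 := b :: remove1 c L'). set (L2 := c :: remove1 c L').
    assert (Hl1 : length L1 = n) by (unfold L1; simpl; rewrite remove1_length by auto; destruct L'; simpl in *; [tauto|lia]).
    assert (Hl2 : length L2 = n) by (unfold L2; simpl; rewrite remove1_length by auto; destruct L'; simpl in *; [tauto|lia]).
    assert (Hav1 : forall x, In x L1 -> avoid a x r).
    { intros x [<-|Hx]; apply Hav; [left; auto|right; eapply remove1_In; eauto]. }
    assert (Hav2 : forall x, In x L2 -> avoid a x r).
    { intros x [<-|Hx]; apply Hav; [right; auto|right; eapply remove1_In; eauto]. }
    pose proof (IH L1 a r Hl1 ltac:(unfold L1; congruence) Hav1) as I1.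
    pose proof (IH L2 a r Hl2 ltac:(unfold L2; congruence) Hav2) as I2.
    unfold cint in *.
    pose proof (cRI_scal (Cinv (Cminus b c)) _ _ _ _ (cRI_minus _ _ _ _ _ _ I1 I2)) as I3.
    eapply cRI_eq; [eapply cRI_ext; [|exact I3]|].
    + intros t _. cbv beta.
      assert (Hbc : Cminus b c <> RtoC 0).
      { intro E. apply Hcb. symmetry. apply Cminus_0_eq. exact E. }
      assert (Hzb : Cminus (circ a r t) b <> RtoC 0) by (apply circ_ne; apply Hav; left; auto).
      assert (Hzc : Cminus (circ a r t) c <> RtoC 0) by (apply circ_ne; apply Hav; right; auto).
      assert (HR : Pl (remove1 c L') (circ a r t) <> RtoC 0).
      { apply Pl_nz. intros x Hx. apply circ_ne. apply Hav. right. eapply remove1_In; eauto. }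
      unfold L1, L2. simpl Pl. rewrite (Pl_remove1 c L') by auto.
      match goal with |- @eq _ ?x ?y => change (@eq C x y) end.
      field. repeat split; auto.
    + apply injective_projections; simpl; ring.
  - assert (HPl : (fun z => Cinv (Pl (b :: L') z)) = (fun z => Cinv (Cpow (Cminus z b) (S (length L'))))).
    { apply functional_extensionality. intro z. rewrite Pl_repeat; auto. apply find_ne_None; auto. }
    rewrite HPl.
    assert (Hb := Hav b (or_introl eq_refl)).
    destruct L' as [|d L''].
    + simpl. destruct (Ceq_dec b a) as [->|Hba].
      * rewrite tpi_mult_1. apply cint_pow1_center.
        destruct Hb as [[_ Hr]|[Hr0 Hr]]; auto. rewrite Cminus_diag, Cmod_0 in Hr. lra.
      * rewrite tpi_mult_0. destruct Hb as [[E _]|[Hr1 Hr2]]; [congruence|].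
        apply cint_pow1_far; auto.
    + simpl length. simpl Nat.eqb. cbv iota. rewrite tpi_mult_0. apply cint_pow_ge2; auto.
Qed.

Lemma Csum_ext n f g : (forall i, (i < n)%nat -> f i = g i) -> Csum n f = Csum n g.
Proof.
  induction n as [|n IH]; intros H; simpl; auto.
  rewrite IH by (intros; apply H; lia). rewrite H by lia. reflexivity.
Qed.

Lemma Csum_scal n (k : C) f : Csum n (fun i => Cmult k (f i)) = Cmult k (Csum n f).
Proof.
  induction n as [|n IH]; simpl.
  - apply injective_projections; simpl; ring.
  - rewrite IH. apply injective_projections; simpl; ring.
Qed.

Lemma Csum_plus n f g : Csum n (fun i => Cplus (f i) (g i)) = Cplus (Csum n f) (Csum n g).
Proof.
  induction n as [|n IH]; simpl.
  - apply injective_projections; simpl; ring.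
  - rewrite IH. apply injective_projections; simpl; ring.
Qed.

Lemma Csum_minus n f g : Csum n (fun i => Cminus (f i) (g i)) = Cminus (Csum n f) (Csum n g).
Proof.
  induction n as [|n IH]; simpl.
  - apply injective_projections; simpl; ring.
  - rewrite IH. apply injective_projections; simpl; ring.
Qed.

Lemma Csum_zero n : Csum n (fun _ => RtoC 0) = RtoC 0.
Proof.
  induction n as [|n IH]; simpl; auto. rewrite IH. apply injective_projections; simpl; ring.
Qed.

Lemma Csum_indicator n (w : nat -> C) b j : (j < n)%nat -> b = w j ->
  (forall i, (i < n)%nat -> i <> j -> w i <> b) ->
  Csum n (fun i => if Ceq_dec b (w i) then RtoC 1 else RtoC 0) = RtoC 1.
Proof.
  induction n as [|n IH]; intros Hj Hb Hu; [lia|]. simpl.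
  destruct (Nat.eq_dec j n) as [->|Hjn].
  - rewrite (Csum_ext n _ (fun _ => RtoC 0)).
    + rewrite Csum_zero. destruct (Ceq_dec b (w n)); [|congruence].
      apply injective_projections; simpl; ring.
    + intros i Hi. destruct (Ceq_dec b (w i)) as [E|]; auto.
      exfalso. apply (Hu i); auto; lia.
  - rewrite IH; [| lia | auto | intros i Hi Hij; apply Hu; auto; lia].
    destruct (Ceq_dec b (w n)) as [E|]. { exfalso. apply (Hu n); auto. }
    apply injective_projections; simpl; ring.
Qed.

Lemma vres_sum (n : nat) (w : nat -> C)
  (Hdist : forall i j, (i < n)%nat -> (j < n)%nat -> i <> j -> w i <> w j) :
  forall m L, length L = m -> L <> nil -> (forall b, In b L -> exists i, (i < n)%nat /\ b = w i) ->
  Csum n (fun i => vres m L (w i)) = if Nat.eqb m 1 then RtoC 1 else RtoC 0.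
Proof.
  induction m as [|m IH]; intros L HL Hnil HS.
  { destruct L; simpl in HL; [congruence|discriminate]. }
  destruct L as [|b L']; [congruence|]. simpl in HL. injection HL; intro HL'.
  simpl vres. destruct (find_ne b L') as [c|] eqn:Hf.
  - destruct (find_ne_Some _ _ _ Hf) as [Hc Hcb].
    set (L1 := b :: remove1 c L'). set (L2 := c :: remove1 c L').
    assert (Hl1 : length L1 = m) by (unfold L1; simpl; rewrite remove1_length by auto; destruct L'; simpl in *; [tauto|lia]).
    assert (Hl2 : length L2 = m) by (unfold L2; simpl; rewrite remove1_length by auto; destruct L'; simpl in *; [tauto|lia]).
    assert (HS1 : forall x, In x L1 -> exists i, (i < n)%nat /\ x = w i).
    { intros x [<-|Hx]; apply HS; [left; auto|right; eapply remove1_In; eauto]. }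
    assert (HS2 : forall x, In x L2 -> exists i, (i < n)%nat /\ x = w i).
    { intros x [<-|Hx]; apply HS; [right; auto|right; eapply remove1_In; eauto]. }
    rewrite Csum_scal, Csum_minus.
    rewrite (IH L1), (IH L2); auto; try (unfold L1, L2; congruence).
    assert (Hm : Nat.eqb (S m) 1 = false).
    { apply Nat.eqb_neq. destruct L'; simpl in *; [tauto|lia]. }
    rewrite Hm. apply injective_projections; simpl; ring.
  - destruct L' as [|d L''].
    + simpl in HL'. subst m. simpl. destruct (HS b (or_introl eq_refl)) as [j [Hj Hbj]].
      apply (Csum_indicator n w b j); auto.
      intros i Hi Hij E. apply (Hdist i j); auto. congruence.
    + simpl length. simpl Nat.eqb. cbv iota. rewrite Csum_zero.
      destruct m; [simpl in HL'; discriminate|]. reflexivity.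
Qed.


Lemma Rcont_eps (g : R -> R) x :
  (forall eps : posreal, exists del : posreal, forall y, Rabs (y - x) < del -> Rabs (g y - g x) < eps) ->
  continuous g x.
Proof.
  intros H. apply filterlim_locally. intro eps. destruct (H eps) as [d Hd].
  exists d. intros y Hy. apply Hd. exact Hy.
Qed.

Lemma cont_eps (g : R -> R) x : continuous g x ->
  forall eps : posreal, exists del : posreal, forall y, Rabs (y - x) < del -> Rabs (g y - g x) < eps.
Proof.
  intros H eps. apply filterlim_locally with (eps := eps) in H.
  destruct H as [d Hd]. exists d. intros y Hy. apply (Hd y Hy).
Qed.

Lemma locally_interval p q x : p < x < q -> locally x (fun y => p < y < q).
Proof.
  intros Hx. assert (Hd : 0 < Rmin (x - p) (q - x)) by (apply Rmin_glb_lt; lra).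
  exists (mkposreal _ Hd). intros y Hy. change (Rabs (y - x) < Rmin (x - p) (q - x)) in Hy.
  apply Rabs_lt_between in Hy. pose proof (Rmin_l (x - p) (q - x)). pose proof (Rmin_r (x - p) (q - x)). lra.
Qed.

Lemma c2d_cont1 f x t : continuity_2d_pt f x t -> continuous (fun u => f u t) x.
Proof.
  intros H. apply Rcont_eps. intro eps. destruct (H eps) as [d Hd].
  exists d. intros y Hy. apply Hd; auto. rewrite Rminus_diag, Rabs_R0. apply cond_pos.
Qed.

Lemma c2d_cont2 f x t : continuity_2d_pt f x t -> continuous (fun s => f x s) t.
Proof.
  intros H. apply Rcont_eps. intro eps. destruct (H eps) as [d Hd].
  exists d. intros y Hy. apply Hd; auto. rewrite Rminus_diag, Rabs_R0. apply cond_pos.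
Qed.

Lemma c2d_ext_loc (f g : R -> R -> R) x y (del : posreal) :
  (forall u v, Rabs (u - x) < del -> Rabs (v - y) < del -> f u v = g u v) ->
  continuity_2d_pt f x y -> continuity_2d_pt g x y.
Proof.
  intros E H eps. destruct (H eps) as [d Hd].
  assert (Hm : 0 < Rmin d del) by (apply Rmin_pos; apply cond_pos).
  exists (mkposreal _ Hm). simpl. intros u v Hu Hv.
  pose proof (Rmin_l d del). pose proof (Rmin_r d del).
  rewrite <- !E; try lra. apply Hd; lra. rewrite Rminus_diag, Rabs_R0; apply cond_pos.
  rewrite Rminus_diag, Rabs_R0; apply cond_pos.
Qed.

Lemma ex_RInt_cont (g : R -> R) c d : (forall t, Rmin c d <= t <= Rmax c d -> continuous g t) -> ex_RInt g c d.
Proof. intros H. apply (ex_RInt_continuous (V:=R_CompleteNormedModule)). exact H. Qed.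

Lemma param_cont_le (f : R -> R -> R) y0 c d eta :
  c <= d -> 0 < eta ->
  (forall y t, Rabs (y - y0) < eta -> c <= t <= d -> continuity_2d_pt f y t) ->
  continuous (fun y => RInt (fun t => f y t) c d) y0.
Proof.
  intros Hcd Heta Hc.
  assert (Hex : forall y, Rabs (y - y0) < eta -> ex_RInt (fun t => f y t) c d).
  { intros y Hy. apply ex_RInt_cont. rewrite Rmin_left, Rmax_right by lra.
    intros t Ht. apply c2d_cont2. apply Hc; auto. }
  apply Rcont_eps. intro eps.
  set (e' := eps / (2 * (d - c + 1))).
  assert (He' : 0 < e') by (unfold e'; apply Rdiv_lt_0_compat; [apply cond_pos|lra]).
  assert (Hdel : forall t, exists del : posreal, c <= t <= d ->
     forall u v, Rabs (u - y0) < del -> Rabs (v - t) < del -> Rabs (f u v - f y0 t) < e').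
  { intros t. destruct (Rle_dec c t) as [H1|H1]; [destruct (Rle_dec t d) as [H2|H2]|].
    - assert (Hy0 : Rabs (y0 - y0) < eta) by (rewrite Rminus_diag, Rabs_R0; lra).
      destruct (Hc y0 t Hy0 (conj H1 H2) (mkposreal _ He')) as [del Hd].
      exists del. intros _ u v Hu Hv. apply Hd; auto.
    - exists (mkposreal 1 Rlt_0_1). intros; lra.
    - exists (mkposreal 1 Rlt_0_1). intros; lra. }
  set (delta := fun t => proj1_sig (constructive_indefinite_description _ (Hdel t))).
  assert (Hdelta : forall t, c <= t <= d -> forall u v, Rabs (u - y0) < delta t -> Rabs (v - t) < delta t ->
     Rabs (f u v - f y0 t) < e').
  { intros t. unfold delta. destruct (constructive_indefinite_description _ (Hdel t)) as [del Hd]. simpl. exact Hd. }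
  destruct (compactness_value_1d c d delta) as [D HD].
  assert (Hm : 0 < Rmin D eta) by (apply Rmin_pos; [apply cond_pos|lra]).
  exists (mkposreal _ Hm). simpl. intros y Hy.
  pose proof (Rmin_l D eta). pose proof (Rmin_r D eta).
  assert (Hy' : Rabs (y - y0) < eta) by lra.
  assert (Hy0 : Rabs (y0 - y0) < eta) by (rewrite Rminus_diag, Rabs_R0; lra).
  assert (Hb : forall s, c <= s <= d -> Rabs (f y s - f y0 s) <= 2 * e').
  { intros s Hs. destruct (Rle_dec (Rabs (f y s - f y0 s)) (2 * e')) as [Hl|Hl]; auto.
    exfalso. apply (HD s Hs). intros [t [Ht [Hst HDt]]].
    apply Hl.
    assert (A1 : Rabs (f y s - f y0 t) < e') by (apply Hdelta; auto; lra).
    assert (A2 : Rabs (f y0 s - f y0 t) < e') by (apply Hdelta; auto; rewrite Rminus_diag, Rabs_R0; apply cond_pos).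
    replace (f y s - f y0 s) with ((f y s - f y0 t) - (f y0 s - f y0 t)) by ring.
    eapply Rle_trans. apply Rabs_triang. rewrite Rabs_Ropp. lra. }
  assert (E : RInt (fun t => f y t) c d - RInt (fun t => f y0 t) c d = RInt (fun t => f y t - f y0 t) c d).
  { symmetry. apply (RInt_minus (V:=R_CompleteNormedModule)); apply Hex; auto. }
  rewrite E.
  eapply Rle_lt_trans. apply (abs_RInt_le_const _ c d (2 * e')); [lra| |exact Hb].
  apply (ex_RInt_minus (V:=R_NormedModule)); apply Hex; auto.
  unfold e'. assert (0 < eps) by apply cond_pos.
  apply (Rmult_lt_reg_r (2 * (d - c + 1))); [lra|].
  field_simplify; [|lra]. nra.
Qed.

Lemma param_cont (f : R -> R -> R) y0 c d eta :
  0 < eta ->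
  (forall y t, Rabs (y - y0) < eta -> Rmin c d <= t <= Rmax c d -> continuity_2d_pt f y t) ->
  continuous (fun y => RInt (fun t => f y t) c d) y0.
Proof.
  intros Heta Hc. destruct (Rle_dec c d) as [H|H].
  - apply (param_cont_le f y0 c d eta); auto. rewrite Rmin_left, Rmax_right in Hc by lra. auto.
  - assert (Hex : forall y, Rabs (y - y0) < eta -> ex_RInt (fun t => f y t) d c).
    { intros y Hy. apply ex_RInt_cont. intros t Ht. apply c2d_cont2. apply Hc; auto.
      rewrite Rmin_right, Rmax_left by lra. rewrite Rmin_left, Rmax_right in Ht by lra. auto. }
    apply (continuous_ext_loc _ (fun y => - RInt (fun t => f y t) d c)).
    + apply (filter_imp (fun y => Rabs (y - y0) < eta)).
      * intros y Hy. symmetry. rewrite <- (opp_RInt_swap (V:=R_CompleteNormedModule)); auto.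
      * exists (mkposreal _ Heta). intros y Hy. exact Hy.
    + apply Rc_opp. apply (param_cont_le f y0 d c eta); auto; try lra.
      intros y t Hy Ht. apply Hc; auto. rewrite Rmin_right, Rmax_left by lra. auto.
Qed.

Lemma c2d_swap f x y : continuity_2d_pt f x y -> continuity_2d_pt (fun u v => f v u) y x.
Proof.
  intros H eps. destruct (H eps) as [d Hd]. exists d. intros u v Hu Hv. apply Hd; auto.
Qed.

Lemma RInt_zero_fun c d : RInt (fun _ : R => 0) c d = 0.
Proof.
  rewrite (RInt_const (V:=R_CompleteNormedModule)). unfold scal; simpl; unfold mult; simpl. ring.
Qed.

Lemma fubini (f : R -> R -> R) a b c d eta : a <= b -> c <= d -> 0 < eta ->
  (forall x t, a - eta < x < b + eta -> c - eta < t < d + eta -> continuity_2d_pt f x t) ->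
  RInt (fun t => RInt (fun x => f x t) a b) c d = RInt (fun x => RInt (fun t => f x t) c d) a b.
Proof.
  intros Hab Hcd Heta Hc.
  set (F := fun s t => RInt (fun x => f x t) a s).
  set (G := fun x => RInt (fun t => f x t) c d).
  assert (F1 : forall x, a - eta < x < b + eta -> continuous G x).
  { intros x Hx. assert (He : 0 < Rmin (x - (a - eta)) (b + eta - x)) by (apply Rmin_glb_lt; lra).
    apply (param_cont f x c d _ He). intros y t Hy Ht.
    rewrite Rmin_left, Rmax_right in Ht by lra.
    pose proof (Rmin_l (x - (a - eta)) (b + eta - x)). pose proof (Rmin_r (x - (a - eta)) (b + eta - x)).
    apply Rabs_lt_between in Hy. apply Hc; lra. }
  assert (F2 : forall s t, a - eta < s < b + eta -> c - eta < t < d + eta -> is_derive (fun u => F u t) s (f s t)).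
  { intros s t Hs Ht. unfold F.
    apply (is_derive_RInt (fun x => f x t) (fun u => RInt (fun x => f x t) a u) a s).
    - apply (filter_imp (fun b0 => a - eta < b0 < b + eta)); [|apply locally_interval; auto].
      intros b0 Hb0. apply (RInt_correct (V:=R_CompleteNormedModule)). apply ex_RInt_cont.
      intros x Hx. apply c2d_cont1. apply Hc; auto.
      pose proof (Rmin_l a b0). pose proof (Rmax_r a b0). pose proof (Rmin_glb_lt a b0 (a - eta)).
      assert (Rmin a b0 > a - eta) by (apply Rmin_glb_lt; lra).
      assert (Rmax a b0 < b + eta) by (apply Rmax_lub_lt; lra). lra.
    - apply c2d_cont1. apply Hc; auto. }
  assert (F3 : forall s, a - eta < s < b + eta -> ex_RInt (fun t => F s t) c d).
  { intros s Hs. apply ex_RInt_cont. rewrite Rmin_left, Rmax_right by lra. intros t Ht.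
    assert (He : 0 < Rmin (t - (c - eta)) (d + eta - t)) by (apply Rmin_glb_lt; lra).
    unfold F. apply (param_cont (fun t x => f x t) t a s _ He).
    intros y x Hy Hx. apply c2d_swap.
    pose proof (Rmin_l (t - (c - eta)) (d + eta - t)). pose proof (Rmin_r (t - (c - eta)) (d + eta - t)).
    apply Rabs_lt_between in Hy.
    assert (Rmin a s > a - eta) by (apply Rmin_glb_lt; lra).
    assert (Rmax a s < b + eta) by (apply Rmax_lub_lt; lra).
    apply Hc; lra. }
  assert (DPhi : forall s, a <= s <= b -> is_derive (fun s => RInt (fun t => F s t) c d) s (G s)).
  { intros s Hs.
    assert (HD := is_derive_RInt_param F c d s).
    replace (G s) with (RInt (fun t => Derive (fun u => F u t) s) c d).
    apply HD.
    - apply (filter_imp (fun x0 => a - eta < x0 < b + eta)); [|apply locally_interval; lra].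
      intros x0 Hx0 t Ht. rewrite Rmin_left, Rmax_right in Ht by lra.
      eexists. apply F2; auto; lra.
    - intros t Ht. rewrite Rmin_left, Rmax_right in Ht by lra.
      assert (Hdl : 0 < Rmin (Rmin (s - (a - eta)) (b + eta - s)) (Rmin (t - (c - eta)) (d + eta - t))).
      { repeat apply Rmin_glb_lt; lra. }
      apply (c2d_ext_loc f _ s t (mkposreal _ Hdl)).
      + intros u v Hu Hv. simpl in Hu, Hv.
        pose proof (Rmin_l (Rmin (s - (a - eta)) (b + eta - s)) (Rmin (t - (c - eta)) (d + eta - t))).
        pose proof (Rmin_r (Rmin (s - (a - eta)) (b + eta - s)) (Rmin (t - (c - eta)) (d + eta - t))).
        pose proof (Rmin_l (s - (a - eta)) (b + eta - s)). pose proof (Rmin_r (s - (a - eta)) (b + eta - s)).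
        pose proof (Rmin_l (t - (c - eta)) (d + eta - t)). pose proof (Rmin_r (t - (c - eta)) (d + eta - t)).
        apply Rabs_lt_between in Hu. apply Rabs_lt_between in Hv.
        symmetry. apply is_derive_unique. apply F2; lra.
      + apply Hc; lra.
    - apply (filter_imp (fun x0 => a - eta < x0 < b + eta)); [|apply locally_interval; lra].
      intros y Hy. apply F3; auto.
    - unfold G. apply RInt_ext. intros t Ht. rewrite Rmin_left, Rmax_right in Ht by lra.
      apply is_derive_unique. apply F2; lra. }
  assert (DPsi : forall s, a <= s <= b -> is_derive (fun s => RInt G a s) s (G s)).
  { intros s Hs. apply (is_derive_RInt G (fun s => RInt G a s) a s).
    - apply (filter_imp (fun b0 => a - eta < b0 < b + eta)); [|apply locally_interval; lra].
      intros b0 Hb0. apply (RInt_correct (V:=R_CompleteNormedModule)). apply ex_RInt_cont.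
      intros x Hx. apply F1.
      assert (Rmin a b0 > a - eta) by (apply Rmin_glb_lt; lra).
      assert (Rmax a b0 < b + eta) by (apply Rmax_lub_lt; lra). lra.
    - apply F1; lra. }
  destruct (Req_dec a b) as [<-|Hne].
  - rewrite RInt_point. change (RInt (fun t => F a t) c d = 0).
    rewrite (RInt_ext _ (fun _ => 0)). apply RInt_zero_fun.
    intros t _. unfold F. rewrite RInt_point. reflexivity.
  - assert (E := eq_is_derive (V:=R_NormedModule) (fun s => RInt (fun t => F s t) c d - RInt G a s) a b).
    change (RInt (fun t => F b t) c d = RInt G a b).
    cut (RInt (fun t => F a t) c d - RInt G a a = RInt (fun t => F b t) c d - RInt G a b).
    + rewrite RInt_point. rewrite (RInt_ext (fun t => F a t) (fun _ => 0)).
      rewrite RInt_zero_fun. change (zero : R) with 0. lra.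
      intros t _. unfold F. rewrite RInt_point. reflexivity.
    + apply E; [|lra]. intros s Hs. 
      eapply is_derive_eq. apply Rder_minus. apply DPhi; auto. apply DPsi; auto.
      rq. change (zero : R) with 0. ring.
Qed.


Definition onseg (z : C) := Im z = 0 /\ 0 <= Re z <= 1.

Lemma notseg_ne x z : 0 <= x <= 1 -> ~ onseg z -> Cminus (RtoC x) z <> RtoC 0.
Proof.
  intros Hx Hz E. apply Cminus_0_eq in E. apply Hz. subst z. unfold onseg, Re, Im; simpl. lra.
Qed.

Lemma Clog_1 : Clog (RtoC 1) = RtoC 0.
Proof.
  unfold Clog, Carg, Cmod; simpl. destruct (Rlt_dec 0 1); [|lra].
  replace (1 * (1 * 1) + 0 * (0 * 1)) with 1 by ring. rewrite sqrt_1, ln_1.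
  replace (0 / 1) with 0 by field. rewrite atan_0. reflexivity.
Qed.

Lemma CRI_RtoC (g : R -> R) a b v : is_RInt g a b v -> CRI (fun x => RtoC (g x)) a b (RtoC v).
Proof.
  intros H. apply (@is_RInt_fct_extend_pair R_NormedModule R_NormedModule). exact H.
  simpl. pose proof (@is_RInt_const R_NormedModule a b 0) as H0.
  match type of H0 with is_RInt _ _ _ ?v => assert (E : v = 0) by (unfold scal; simpl; unfold mult; simpl; ring) end.
  rewrite E in H0. exact H0.
Qed.

Lemma int_pow m : CRI (fun x => Cpow (RtoC x) m) 0 1 (RtoC (/ INR (S m))).
Proof.
  apply (cRI_ext (fun x => RtoC (x ^ m))). { intros; apply RtoC_pow. }
  apply CRI_RtoC.
  replace (/ INR (S m)) with (/ INR (S m) * 1 ^ (S m) - / INR (S m) * 0 ^ (S m)).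
  2:{ rewrite pow1, pow_i by lia. assert (0 < INR (S m)) by (apply lt_0_INR; lia). field. lra. }
  apply (is_RInt_derive (fun x => / INR (S m) * x ^ (S m))).
  - intros x _. eapply is_derive_eq.
    apply (is_derive_scal (fun y => y ^ (S m)) x (/ INR (S m))).
    apply is_derive_pow. apply Rder_id.
    simpl pred. assert (0 < INR (S m)) by (apply lt_0_INR; lia). rq; field. lra.
  - intros x _. apply (continuous_ext (fun y => y ^ m)). auto.
    apply (ex_derive_continuous (K:=R_AbsRing) (V:=R_NormedModule)). eexists. apply is_derive_pow. apply Rder_id.
Qed.

Lemma notseg_nz z : ~ onseg z -> z <> RtoC 0.
Proof. intros H E. apply H. subst. unfold onseg, Re, Im; simpl. lra. Qed.

Lemma int_log z : ~ onseg z ->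
  CRI (fun x => Cinv (Cminus (RtoC x) z)) 0 1 (Clog (Cminus (RtoC 1) (Cinv z))).
Proof.
  intros Hz. assert (Hz0 := notseg_nz z Hz).
  set (u := fun x : R => Cminus (RtoC 1) (Cmult (RtoC x) (Cinv z))).
  assert (Hu : forall x, cder u x (Copp (Cinv z))).
  { intro x. unfold u.
    apply (cder_eq _ _ _ _ (cder_minus _ _ _ _ _ (cder_const (RtoC 1) x)
              (cder_mult _ _ _ _ _ (cder_RtoC x) (cder_const (Cinv z) x)))).
    apply injective_projections; simpl; ring. }
  assert (Hreg : forall x, 0 <= x <= 1 -> 0 < Re (u x) \/ Im (u x) <> 0).
  { intros x Hx. destruct z as [p q].
    assert (Hpq : 0 < p * p + q * q).
    { destruct (Req_dec q 0) as [->|Hq].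
      - assert (p <> 0) by (intro; subst; apply Hz0; reflexivity). nra.
      - nra. }
    assert (ER : Re (u x) = 1 - x * p / (p * p + q * q)).
    { unfold u, Re, Cinv; simpl. field. lra. }
    assert (EI : Im (u x) = x * q / (p * p + q * q)).
    { unfold u, Im, Cinv; simpl. field. lra. }
    rewrite ER, EI.
    destruct (Req_dec x 0) as [->|Hx0].
    - left. replace (0 * p / (p * p + q * q)) with 0 by (field; lra). lra.
    - destruct (Req_dec q 0) as [->|Hq].
      + left. unfold onseg, Re, Im in Hz; simpl in Hz.
        assert (Hp : p < 0 \/ 1 < p) by lra.
        replace (x * p / (p * p + 0 * 0)) with (x / p) by (field; destruct Hp; lra).
        destruct Hp as [Hp|Hp].
        * assert (x / p <= 0).
          { unfold Rdiv. assert (/ p < 0) by (apply Rinv_lt_0_compat; lra). nra. }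
          lra.
        * assert (x / p < 1).
          { apply (Rmult_lt_reg_r p); [lra|]. unfold Rdiv. rewrite Rmult_assoc, Rinv_l by lra. lra. }
          lra.
      + right. intro E. unfold Rdiv in E. apply Rmult_integral in E. destruct E as [E|E].
        * apply Rmult_integral in E. destruct E; contradiction.
        * assert (/ (p * p + q * q) > 0) by (apply Rinv_0_lt_compat; lra). lra. }
  assert (Hune : forall x, 0 <= x <= 1 -> u x <> RtoC 0).
  { intros x Hx E. destruct (Hreg x Hx) as [H|H]; rewrite E in H; simpl in H; [lra|apply H; reflexivity]. }
  assert (Eu1 : u 1 = Cminus (RtoC 1) (Cinv z)).
  { unfold u. apply injective_projections; simpl; ring. }
  assert (Eu0 : u 0 = RtoC 1).
  { unfold u. apply injective_projections; simpl; ring. }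
  eapply cRI_eq.
  - apply (FTC_C (fun x => Clog (u x))).
    + intros t Ht. apply (cder_eq _ _ _ _ (cder_Clog _ _ _ (Hu t) (Hreg t Ht))).
      assert (Htz := notseg_ne t z Ht Hz). assert (Hut := Hune t Ht).
      revert Hut. unfold u. intro Hut.
      match goal with |- @eq _ ?a ?b => change (@eq C a b) end.
      field. repeat split; auto.
      intro E. apply Htz. apply Cminus_0_eq in E. rewrite E. apply Cminus_diag.
    + intros t Ht. apply ccont_inv. apply ccont_minus. apply ccont_RtoC. apply continuous_id.
      apply ccont_const. apply notseg_ne; auto.
    + lra.
  - rewrite Eu1, Eu0, Clog_1. apply injective_projections; simpl; ring.
Qed.

Lemma gm_int m z : ~ onseg z ->
  CRI (fun x => Cmult (Cpow (RtoC x) m) (Cinv (Cminus (RtoC x) z))) 0 1 (g_m m z).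
Proof.
  intros Hz. assert (Hz0 := notseg_nz z Hz).
  induction m as [|m IH].
  - eapply cRI_eq. eapply cRI_ext; [|apply (int_log z Hz)].
    + intros t _. cbv beta. change (Cpow (RtoC t) 0) with (RtoC 1).
      apply injective_projections; simpl; ring.
    + unfold g_m. change (Cpow z 0) with (RtoC 1). simpl Csum.
      apply injective_projections; simpl; ring.
  - eapply cRI_eq. eapply cRI_ext; [|apply (cRI_plus _ _ _ _ _ _ (int_pow m) (cRI_scal z _ _ _ _ IH))].
    + intros t Ht. rewrite Rmin_left, Rmax_right in Ht by lra. cbv beta.
      assert (Htz : Cminus (RtoC t) z <> RtoC 0) by (apply notseg_ne; auto; lra).
      rewrite Cpow_S. match goal with |- @eq _ ?a ?b => change (@eq C a b) end.
      field. auto.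
    + unfold g_m. cbn [Csum].
      assert (Hzm := Cpow_nz z m Hz0).
      assert (HS := INR_S_neq0 m).
      rewrite (Cpow_S z m). rewrite RtoC_inv.
      2:{ intro E. apply HS. rewrite E. reflexivity. }
      generalize (Csum m (fun k => Cinv (Cmult (RtoC (INR (S k))) (Cpow z (S k))))). intro Sg.

      match goal with |- @eq _ ?a ?b => change (@eq C a b) end.
      field. repeat split; auto.
Qed.


Fixpoint rootsl (w : nat -> C) (N : nat -> nat) (n : nat) : list C :=
  match n with O => nil | S k => rootsl w N k ++ repeat (w k) (N k) end.

Lemma Pl_app L1 L2 z : Pl (L1 ++ L2) z = Cmult (Pl L1 z) (Pl L2 z).
Proof.
  induction L1 as [|b L IH]; simpl.
  - apply injective_projections; simpl; ring.
  - rewrite IH. apply Cmult_assoc.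
Qed.

Lemma Pl_rep b k z : Pl (repeat b k) z = Cpow (Cminus z b) k.
Proof. induction k as [|k IH]; simpl; auto. rewrite IH. reflexivity. Qed.

Lemma hpoly_Pl n w N z : hpoly n w N z = Pl (rootsl w N n) z.
Proof.
  unfold hpoly. induction n as [|n IH]; simpl; auto.
  rewrite Pl_app, Pl_rep, IH. reflexivity.
Qed.

Lemma rootsl_In w N n b : In b (rootsl w N n) -> exists i, (i < n)%nat /\ b = w i.
Proof.
  induction n as [|n IH]; simpl; [tauto|].
  intros H. apply in_app_or in H. destruct H as [H|H].
  - destruct (IH H) as [i [Hi E]]. exists i; split; auto; lia.
  - apply repeat_spec in H. exists n; split; auto.
Qed.

Lemma rootsl_nonnil w N n : (1 <= n)%nat -> (forall i, (i < n)%nat -> (1 <= N i)%nat) -> rootsl w N n <> nil.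
Proof.
  destruct n as [|n]; [lia|]. intros _ HN. simpl. intro E.
  apply app_eq_nil in E. destruct E as [_ E].
  assert (H := HN n ltac:(lia)). destruct (N n); [lia|]. simpl in E. discriminate.
Qed.

Lemma Csum_shift n f : Csum (S n) f = Cplus (f O) (Csum n (fun k => f (S k))).
Proof.
  induction n as [|n IH].
  - simpl. apply injective_projections; simpl; ring.
  - change (Csum (S (S n)) f) with (Cplus (Csum (S n) f) (f (S n))).
    rewrite IH. simpl. apply injective_projections; simpl; ring.
Qed.

Lemma In_firstn (A : Type) n (l : list A) x : In x (firstn n l) -> In x l.
Proof.
  revert l; induction n as [|n IH]; intros l; simpl; [tauto|].
  destruct l as [|a l]; simpl; [tauto|]. intros [H|H]; auto.
Qed.

Lemma In_skipn (A : Type) n (l : list A) x : In x (skipn n l) -> In x l.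
Proof.
  revert l; induction n as [|n IH]; intros l; simpl; [tauto|].
  destruct l as [|a l]; simpl; [tauto|]. intros H; right; auto.
Qed.

Definition Tsum (L : list C) (x z : C) : C :=
  Csum (length L) (fun k => Cmult (Cinv (Pl (firstn (S k) L) x)) (Cinv (Pl (skipn k L) z))).

Lemma telescope L x z : Cminus x z <> RtoC 0 ->
  (forall b, In b L -> Cminus x b <> RtoC 0 /\ Cminus z b <> RtoC 0) ->
  Cinv (Cmult (Cminus x z) (Pl L z)) = Cplus (Cinv (Cmult (Cminus x z) (Pl L x))) (Tsum L x z).
Proof.
  intros Hxz. induction L as [|b L IH]; intros HL.
  - unfold Tsum. simpl. apply injective_projections; simpl; ring.
  - assert (Hb := HL b (or_introl eq_refl)). destruct Hb as [Hxb Hzb].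
    assert (HL' : forall c, In c L -> Cminus x c <> RtoC 0 /\ Cminus z c <> RtoC 0) by (intros; apply HL; right; auto).
    assert (HPx : Pl L x <> RtoC 0) by (apply Pl_nz; intros c Hc; apply HL'; auto).
    assert (HPz : Pl L z <> RtoC 0) by (apply Pl_nz; intros c Hc; apply HL'; auto).
    specialize (IH HL').
    unfold Tsum. simpl length. rewrite Csum_shift.
    assert (E : Csum (length L) (fun k => Cmult (Cinv (Pl (firstn (S (S k)) (b :: L)) x)) (Cinv (Pl (skipn (S k) (b :: L)) z)))
              = Cmult (Cinv (Cminus x b)) (Tsum L x z)).
    { unfold Tsum. rewrite <- Csum_scal. apply Csum_ext. intros i _.
      assert (Hp : Pl (firstn (S i) L) x <> RtoC 0).
      { apply Pl_nz. intros c Hc. apply HL'. eapply In_firstn; eauto. }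
      assert (Hq : Pl (skipn i L) z <> RtoC 0).
      { apply Pl_nz. intros c Hc. apply HL'. eapply In_skipn; eauto. }
      change (firstn (S (S i)) (b :: L)) with (b :: firstn (S i) L).
      change (skipn (S i) (b :: L)) with (skipn i L).
      change (Pl (b :: firstn (S i) L) x) with (Cmult (Cminus x b) (Pl (firstn (S i) L) x)).
      field. repeat split; auto. }
    rewrite E.
    assert (ET : Tsum L x z = Cminus (Cinv (Cmult (Cminus x z) (Pl L z))) (Cinv (Cmult (Cminus x z) (Pl L x)))).
    { rewrite IH. apply injective_projections; simpl; ring. }
    rewrite ET.
    change (firstn 1 (b :: L)) with [b]. change (skipn 0 (b :: L)) with (b :: L).
    simpl Pl.
    field. repeat split; auto.
Qed.


Lemma im_le_Cmod (c : C) : Rabs (Im c) <= Cmod c.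
Proof.
  pose proof (Cmod2_alt c). pose proof (Cmod_ge_0 c).
  pose proof (pow2_ge_0 (Re c)). simpl in *. apply Rabs_le; split; nra.
Qed.

Definition sd (z : C) : R :=
  if Req_EM_T (Im z) 0 then (if Rlt_dec (Re z) 0 then - Re z / 5 else (Re z - 1) / 5) else Rabs (Im z) / 4.

Lemma sd_pos z : ~ onseg z -> 0 < sd z.
Proof.
  intros Hz. unfold sd. destruct (Req_EM_T (Im z) 0) as [E|E].
  - destruct (Rlt_dec (Re z) 0); [lra|]. unfold onseg in Hz.
    assert (1 < Re z) by (destruct (Rle_dec (Re z) 1); [exfalso; apply Hz; split; [auto|lra]|lra]). lra.
  - pose proof (Rabs_pos_lt _ E). lra.
Qed.

Lemma sd_prop z : ~ onseg z -> forall x, - sd z < x < 1 + sd z -> 3 * sd z < Cmod (Cminus (RtoC x) z).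
Proof.
  intros Hz x Hx. pose proof (sd_pos z Hz) as Hp.
  pose proof (re_le_Cmod (Cminus (RtoC x) z)) as Hre.
  pose proof (im_le_Cmod (Cminus (RtoC x) z)) as Him.
  assert (ERe : Re (Cminus (RtoC x) z) = x - Re z) by (unfold Re; simpl; ring).
  assert (EIm : Im (Cminus (RtoC x) z) = - Im z) by (unfold Im; simpl; ring).
  rewrite ERe in Hre. rewrite EIm, Rabs_Ropp in Him.
  revert Hx Hp. unfold sd. destruct (Req_EM_T (Im z) 0) as [E|E].
  - destruct (Rlt_dec (Re z) 0) as [H1|H1].
    + intros Hx Hp. assert (x - Re z <= Rabs (x - Re z)) by apply Rle_abs. lra.
    + intros Hx Hp. assert (- (x - Re z) <= Rabs (x - Re z)) by (rewrite <- Rabs_Ropp; apply Rle_abs). lra.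
  - intros Hx Hp. lra.
Qed.

Lemma fin_pos_min n (f : nat -> R) : (forall i, (i < n)%nat -> 0 < f i) ->
  exists rho, 0 < rho /\ forall i, (i < n)%nat -> rho <= f i.
Proof.
  induction n as [|n IH]; intros H.
  - exists 1. split; [lra|]. intros; lia.
  - destruct IH as [r [Hr Hr']]. { intros; apply H; lia. }
    exists (Rmin r (f n)). split. apply Rmin_pos; auto; apply H; lia.
    intros i Hi. destruct (Nat.eq_dec i n) as [->|Hin]. apply Rmin_r.
    eapply Rle_trans. apply Rmin_l. apply Hr'. lia.
Qed.

Lemma rho_exists n (w : nat -> C)
  (Hdist : forall i j, (i < n)%nat -> (j < n)%nat -> i <> j -> w i <> w j)
  (Hseg : forall i, (i < n)%nat -> ~ onseg (w i)) :
  exists rho, 0 < rho /\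
    (forall i j, (i < n)%nat -> (j < n)%nat -> i <> j -> 3 * rho < Cmod (Cminus (w j) (w i))) /\
    (forall j x, (j < n)%nat -> - rho < x < 1 + rho -> 3 * rho < Cmod (Cminus (RtoC x) (w j))).
Proof.
  destruct (fin_pos_min n (fun j => sd (w j))) as [r1 [Hr1 Hr1']].
  { intros; apply sd_pos; auto. }
  set (pf := fun k : nat => if Nat.eq_dec (k / n)%nat (k mod n)%nat then 1 else Cmod (Cminus (w (k mod n)%nat) (w (k / n)%nat))).
  destruct (fin_pos_min (n * n) pf) as [r2 [Hr2 Hr2']].
  { intros k Hk. unfold pf. destruct (Nat.eq_dec (k / n)%nat (k mod n)%nat) as [E|E]; [lra|].
    apply Cmod_gt_0. intro Z. apply Cminus_0_eq in Z.
    assert (n <> 0)%nat by (intro; subst; simpl in Hk; lia).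
    revert Z. apply Hdist; auto.
    - apply Nat.mod_upper_bound; auto.
    - apply Nat.Div0.div_lt_upper_bound. lia.
    }
  exists (Rmin r1 (r2 / 4)). split; [apply Rmin_pos; lra|]. split.
  - intros i j Hi Hj Hij. pose proof (Rmin_r r1 (r2 / 4)).
    assert (Hk : (i * n + j < n * n)%nat) by nia.
    specialize (Hr2' _ Hk). unfold pf in Hr2'.
    assert (Ed : ((i * n + j) / n = i)%nat).
    { rewrite Nat.div_add_l by lia. rewrite Nat.div_small by lia. lia. }
    assert (Em : ((i * n + j) mod n = j)%nat).
    { rewrite Nat.add_comm, Nat.Div0.mod_add. apply Nat.mod_small. lia. }
    rewrite Ed, Em in Hr2'. destruct (Nat.eq_dec i j); [contradiction|]. lra.
  - intros j x Hj Hx. pose proof (Rmin_l r1 (r2 / 4)). pose proof (Rmin_pos r1 (r2/4)).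
    specialize (Hr1' j Hj).
    assert (Hs := sd_prop (w j) (Hseg j Hj) x). lra.
Qed.


Definition CRInt (f : R -> C) (a b : R) : C := (RInt (fun x => Re (f x)) a b, RInt (fun x => Im (f x)) a b).

Lemma cRI_uniq f a b u v : CRI f a b u -> CRI f a b v -> u = v.
Proof.
  intros H1 H2.
  pose proof (is_RInt_fct_extend_fst (U:=R_NormedModule) (V:=R_NormedModule) f a b u H1) as A1.
  pose proof (is_RInt_fct_extend_fst (U:=R_NormedModule) (V:=R_NormedModule) f a b v H2) as A2.
  pose proof (is_RInt_fct_extend_snd (U:=R_NormedModule) (V:=R_NormedModule) f a b u H1) as B1.
  pose proof (is_RInt_fct_extend_snd (U:=R_NormedModule) (V:=R_NormedModule) f a b v H2) as B2.
  apply (is_RInt_unique (V:=R_CompleteNormedModule)) in A1. apply (is_RInt_unique (V:=R_CompleteNormedModule)) in A2.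
  apply (is_RInt_unique (V:=R_CompleteNormedModule)) in B1. apply (is_RInt_unique (V:=R_CompleteNormedModule)) in B2.
  apply injective_projections; [etransitivity; [symmetry; apply A1|apply A2] | etransitivity; [symmetry; apply B1|apply B2]].
Qed.

Lemma cRI_CRInt f a b u : CRI f a b u -> CRInt f a b = u.
Proof.
  intros H.
  pose proof (is_RInt_fct_extend_fst (U:=R_NormedModule) (V:=R_NormedModule) f a b u H) as A1.
  pose proof (is_RInt_fct_extend_snd (U:=R_NormedModule) (V:=R_NormedModule) f a b u H) as B1.
  apply (is_RInt_unique (V:=R_CompleteNormedModule)) in A1. apply (is_RInt_unique (V:=R_CompleteNormedModule)) in B1.
  unfold CRInt. apply injective_projections; simpl; auto.
Qed.

Lemma CRInt_correct f a b : a <= b -> (forall x, a <= x <= b -> ccont f x) -> CRI f a b (CRInt f a b).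
Proof.
  intros Hab H. apply (@is_RInt_fct_extend_pair R_NormedModule R_NormedModule).
  - apply (RInt_correct (V:=R_CompleteNormedModule)). apply ex_RInt_cont.
    rewrite Rmin_left, Rmax_right by lra. intros; apply H; auto.
  - apply (RInt_correct (V:=R_CompleteNormedModule)). apply ex_RInt_cont.
    rewrite Rmin_left, Rmax_right by lra. intros; apply H; auto.
Qed.

Lemma cRI_Csum K (f : nat -> R -> C) a b (v : nat -> C) :
  (forall k, (k < K)%nat -> CRI (f k) a b (v k)) ->
  CRI (fun x => Csum K (fun k => f k x)) a b (Csum K v).
Proof.
  induction K as [|K IH]; intros H; simpl.
  - apply cRI_zero.
  - apply cRI_plus. apply IH; intros; apply H; lia. apply H; lia.
Qed.

Lemma ccont_comp {U V : UniformSpace} (g : U -> V) (f : V -> C) x :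
  continuous g x -> ccont f (g x) -> ccont (fun s => f (g s)) x.
Proof.
  intros Hg [H1 H2]; split.
  - apply (continuous_comp g (fun v => Re (f v))); auto.
  - apply (continuous_comp g (fun v => Im (f v))); auto.
Qed.

Lemma ccont_Pl {U : UniformSpace} L (g : U -> C) x : ccont g x -> ccont (fun s => Pl L (g s)) x.
Proof.
  intros H. induction L as [|b L IH]; simpl.
  - apply ccont_const.
  - apply ccont_mult; auto. apply ccont_minus; auto. apply ccont_const.
Qed.

Lemma circ_fubini (K : R -> R -> C) eta :
  0 < eta ->
  (forall x t, - eta < x < 1 + eta -> ccont (fun p : R * R => K (fst p) (snd p)) (x, t)) ->
  (forall x, - eta < x < 1 + eta -> CRI (fun t => K x t) 0 (2 * PI) (RtoC 0)) ->
  CRI (fun t => CRInt (fun x => K x t) 0 1) 0 (2 * PI) (RtoC 0).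
Proof.
  intros Heta Hc Hz. assert (HPI := PI_RGT_0).
  apply (@is_RInt_fct_extend_pair R_NormedModule R_NormedModule).
  - simpl. set (Kr := fun x t => Re (K x t)).
    assert (Hc2 : forall x t, - eta < x < 1 + eta -> continuity_2d_pt Kr x t).
    { intros x t Hx. apply continuity_2d_pt_filterlim. apply (Hc x t Hx). }
    assert (Hex : ex_RInt (fun t => RInt (fun x => Kr x t) 0 1) 0 (2 * PI)).
    { apply ex_RInt_cont. intros t _. 
      apply (param_cont (fun t x => Kr x t) t 0 1 1). lra.
      intros y s _ Hs. rewrite Rmin_left, Rmax_right in Hs by lra. apply c2d_swap. apply Hc2. lra. }
    assert (HF := fubini Kr 0 1 0 (2 * PI) eta ltac:(lra) ltac:(lra) Heta ltac:(intros; apply Hc2; lra)).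
    assert (Hv : RInt (fun t => RInt (fun x => Kr x t) 0 1) 0 (2 * PI) = 0).
    { rewrite HF. rewrite (RInt_ext _ (fun _ => 0)). apply RInt_zero_fun.
      intros x Hx. rewrite Rmin_left, Rmax_right in Hx by lra.
      pose proof (is_RInt_fct_extend_fst (U:=R_NormedModule) (V:=R_NormedModule) _ _ _ _ (Hz x ltac:(lra))) as A.
      apply (is_RInt_unique (V:=R_CompleteNormedModule)) in A. exact A. }
    pose proof (RInt_correct (V:=R_CompleteNormedModule) _ _ _ Hex) as Hc3. rewrite Hv in Hc3. exact Hc3.
  - simpl. set (Kr := fun x t => Im (K x t)).
    assert (Hc2 : forall x t, - eta < x < 1 + eta -> continuity_2d_pt Kr x t).
    { intros x t Hx. apply continuity_2d_pt_filterlim. apply (Hc x t Hx). }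
    assert (Hex : ex_RInt (fun t => RInt (fun x => Kr x t) 0 1) 0 (2 * PI)).
    { apply ex_RInt_cont. intros t _. 
      apply (param_cont (fun t x => Kr x t) t 0 1 1). lra.
      intros y s _ Hs. rewrite Rmin_left, Rmax_right in Hs by lra. apply c2d_swap. apply Hc2. lra. }
    assert (HF := fubini Kr 0 1 0 (2 * PI) eta ltac:(lra) ltac:(lra) Heta ltac:(intros; apply Hc2; lra)).
    assert (Hv : RInt (fun t => RInt (fun x => Kr x t) 0 1) 0 (2 * PI) = 0).
    { rewrite HF. rewrite (RInt_ext _ (fun _ => 0)). apply RInt_zero_fun.
      intros x Hx. rewrite Rmin_left, Rmax_right in Hx by lra.
      pose proof (is_RInt_fct_extend_snd (U:=R_NormedModule) (V:=R_NormedModule) _ _ _ _ (Hz x ltac:(lra))) as A.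
      apply (is_RInt_unique (V:=R_CompleteNormedModule)) in A. exact A. }
    pose proof (RInt_correct (V:=R_CompleteNormedModule) _ _ _ Hex) as Hc3. rewrite Hv in Hc3. exact Hc3.
Qed.


Definition Afun (m : nat) (L : list C) (x : R) (z : C) : C :=
  Cmult (Cpow (RtoC x) m) (Cinv (Cmult (Cminus (RtoC x) z) (Pl L (RtoC x)))).
Definition alf (m : nat) (L : list C) (k : nat) (x : R) : C :=
  Cmult (Cpow (RtoC x) m) (Cinv (Pl (firstn (S k) L) (RtoC x))).
Definition ak (m : nat) (L : list C) (k : nat) : C := CRInt (alf m L k) 0 1.
Definition bet (L : list C) (k : nat) (z : C) : C := Cinv (Pl (skipn k L) z).

Lemma ccont_RtoC_id x : ccont (fun s : R => RtoC s) x.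
Proof. apply ccont_RtoC. apply continuous_id. Qed.

Lemma Cmult_nz (x y : C) : x <> RtoC 0 -> y <> RtoC 0 -> Cmult x y <> RtoC 0.
Proof. intros Hx Hy E. apply Cmult_integral in E. tauto. Qed.

Lemma ccont_alf m L k x : (forall b, In b L -> Cminus (RtoC x) b <> RtoC 0) -> ccont (alf m L k) x.
Proof.
  intros H. unfold alf. apply ccont_mult. apply ccont_pow. apply ccont_RtoC_id.
  apply ccont_inv. apply ccont_Pl. apply ccont_RtoC_id.
  apply Pl_nz. intros b Hb. apply H. eapply In_firstn; eauto.
Qed.

Lemma ccont_Afun m L x z : (forall b, In b L -> Cminus (RtoC x) b <> RtoC 0) -> Cminus (RtoC x) z <> RtoC 0 ->
  ccont (fun s => Afun m L s z) x.
Proof.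
  intros H Hz. unfold Afun. apply ccont_mult. apply ccont_pow. apply ccont_RtoC_id.
  apply ccont_inv. apply ccont_mult. apply ccont_minus. apply ccont_RtoC_id. apply ccont_const.
  apply ccont_Pl. apply ccont_RtoC_id.
  apply Cmult_nz; auto. apply Pl_nz. auto.
Qed.

Lemma decomp m n w N z :
  let L := rootsl w N n in
  ~ onseg z ->
  (forall b, In b L -> Cminus z b <> RtoC 0) ->
  (forall b x, In b L -> 0 <= x <= 1 -> Cminus (RtoC x) b <> RtoC 0) ->
  G_m m n w N z = Cplus (CRInt (fun x => Afun m L x z) 0 1)
                        (Csum (length L) (fun k => Cmult (ak m L k) (bet L k z))).
Proof.
  intros L Hz Hzb Hxb.
  assert (Hxz : forall x, 0 <= x <= 1 -> Cminus (RtoC x) z <> RtoC 0) by (intros; apply notseg_ne; auto).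
  pose proof (cRI_scal (Cinv (Pl L z)) _ _ _ _ (gm_int m z Hz)) as H2.
  assert (H3 : CRI (fun x => Cplus (Afun m L x z) (Csum (length L) (fun k => Cmult (alf m L k x) (bet L k z)))) 0 1
                   (Cplus (CRInt (fun x => Afun m L x z) 0 1) (Csum (length L) (fun k => Cmult (ak m L k) (bet L k z))))).
  { apply cRI_plus.
    - apply CRInt_correct; [lra|]. intros x Hx. apply ccont_Afun. intros; apply Hxb; auto. apply Hxz; auto.
    - apply cRI_Csum. intros k _.
      apply (cRI_ext (fun x => Cmult (bet L k z) (alf m L k x))).
      { intros; apply Cmult_comm. }
      rewrite Cmult_comm. apply cRI_scal. apply CRInt_correct; [lra|].
      intros x Hx. apply ccont_alf. intros; apply Hxb; auto. }
  assert (E : Cmult (Cinv (Pl L z)) (g_m m z) =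
              Cplus (CRInt (fun x => Afun m L x z) 0 1) (Csum (length L) (fun k => Cmult (ak m L k) (bet L k z)))).
  { apply (cRI_uniq _ _ _ _ _ H2). eapply cRI_ext; [|exact H3].
    intros x Hx. rewrite Rmin_left, Rmax_right in Hx by lra. cbv beta.
    assert (HPz : Pl L z <> RtoC 0) by (apply Pl_nz; auto).
    assert (HPx : Pl L (RtoC x) <> RtoC 0) by (apply Pl_nz; intros; apply Hxb; auto; lra).
    assert (Hxz' := Hxz x ltac:(lra)).
    assert (T := telescope L (RtoC x) z Hxz' ltac:(intros b Hb; split; [apply Hxb; auto; lra|apply Hzb; auto])).
    assert (ES : Csum (length L) (fun k => Cmult (alf m L k x) (bet L k z)) = Cmult (Cpow (RtoC x) m) (Tsum L (RtoC x) z)).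
    { unfold Tsum. rewrite <- Csum_scal. apply Csum_ext. intros k _. unfold alf, bet.
      apply injective_projections; simpl; ring. }
    rewrite ES. unfold Afun.
    replace (Cmult (Cinv (Pl L z)) (Cmult (Cpow (RtoC x) m) (Cinv (Cminus (RtoC x) z))))
      with (Cmult (Cpow (RtoC x) m) (Cinv (Cmult (Cminus (RtoC x) z) (Pl L z)))) by (field; auto).
    rewrite T. apply injective_projections; simpl; ring. }
  unfold G_m, Cdiv. rewrite hpoly_Pl. fold L. rewrite <- E. apply Cmult_comm.
Qed.

Definition cval (m n : nat) (w : nat -> C) (N : nat -> nat) (i : nat) : C :=
  let L := rootsl w N n in
  Csum (length L) (fun k => Cmult (ak m L k) (vres (length L - k) (skipn k L) (w i))).

Lemma Cmod_tri_lower (x z a : C) : Cmod (Cminus x a) - Cmod (Cminus z a) <= Cmod (Cminus x z).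
Proof.
  assert (E : Cminus x a = Cplus (Cminus x z) (Cminus z a)) by (apply injective_projections; simpl; ring).
  rewrite E. pose proof (Cmod_triangle (Cminus x z) (Cminus z a)). lra.
Qed.

Lemma main_circle n w N m rho
  (Hdist : forall i j, (i < n)%nat -> (j < n)%nat -> i <> j -> w i <> w j)
  (Hseg : forall i, (i < n)%nat -> ~ onseg (w i))
  (Hrho : 0 < rho)
  (P1 : forall i j, (i < n)%nat -> (j < n)%nat -> i <> j -> 3 * rho < Cmod (Cminus (w j) (w i)))
  (P2 : forall j x, (j < n)%nat -> - rho < x < 1 + rho -> 3 * rho < Cmod (Cminus (RtoC x) (w j)))
  i (Hi : (i < n)%nat) r (Hr : 0 < r < rho) :
  cint (G_m m n w N) (w i) r (Cmult tpi (cval m n w N i)).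
Proof.
  set (L := rootsl w N n). set (a := w i).
  assert (Froot : forall b, In b L -> exists j, (j < n)%nat /\ b = w j) by (intros b Hb; apply (rootsl_In w N n b Hb)).
  assert (Favoid : forall b, In b L -> avoid a b r).
  { intros b Hb. destruct (Froot b Hb) as [j [Hj ->]]. unfold a.
    destruct (Nat.eq_dec j i) as [->|Hji]; [left; split; auto; lra|].
    right. split; [lra|]. specialize (P1 i j Hi Hj (not_eq_sym Hji)). lra. }
  assert (Fxroot : forall b x, In b L -> - rho < x < 1 + rho -> Cminus (RtoC x) b <> RtoC 0).
  { intros b x Hb Hx E. destruct (Froot b Hb) as [j [Hj ->]].
    specialize (P2 j x Hj Hx). rewrite E, Cmod_0 in P2. lra. }
  assert (Fxz : forall t x, - rho < x < 1 + rho -> 2 * rho < Cmod (Cminus (RtoC x) (circ a r t))).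
  { intros t x Hx. pose proof (Cmod_tri_lower (RtoC x) (circ a r t) a).
    rewrite circ_minus, Cmod_mult, Cmod_Ceit, Cmod_R, Rabs_pos_eq in H by lra.
    specialize (P2 i x Hi Hx). fold a in P2. lra. }
  assert (Fxz' : forall t x, - rho < x < 1 + rho -> Cminus (RtoC x) (circ a r t) <> RtoC 0).
  { intros t x Hx E. specialize (Fxz t x Hx). rewrite E, Cmod_0 in Fxz. lra. }
  assert (Fns : forall t, ~ onseg (circ a r t)).
  { intros t Hs. destruct Hs as [H1 H2].
    apply (Fxz' t (Re (circ a r t))). lra.
    apply injective_projections; simpl; unfold Re, Im in *; simpl in *; lra. }
  assert (Fzb : forall t b, In b L -> Cminus (circ a r t) b <> RtoC 0).
  { intros t b Hb. apply circ_ne. apply Favoid; auto. }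
  set (K := fun x t => Cmult (Afun m L x (circ a r t)) (dcirc r t)).
  assert (HPhi : CRI (fun t => CRInt (fun x => K x t) 0 1) 0 (2 * PI) (RtoC 0)).
  { apply (circ_fubini K rho Hrho).
    - intros x t Hx. unfold K, Afun.
      apply ccont_mult; [apply ccont_mult|].
      + apply ccont_pow. apply (ccont_comp (fun p : R * R => fst p) (fun s => RtoC s)).
        apply continuous_fst. apply ccont_RtoC_id.
      + apply ccont_inv. apply ccont_mult. apply ccont_minus.
        apply (ccont_comp (fun p : R * R => fst p) (fun s => RtoC s)). apply continuous_fst. apply ccont_RtoC_id.
        apply (ccont_comp (fun p : R * R => snd p) (fun s => circ a r s)). apply continuous_snd. apply ccont_circ.
        apply ccont_Pl. apply (ccont_comp (fun p : R * R => fst p) (fun s => RtoC s)). apply continuous_fst. apply ccont_RtoC_id.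
        simpl. apply Cmult_nz. apply Fxz'; auto. apply Pl_nz. intros; apply Fxroot; auto.
      + apply (ccont_comp (fun p : R * R => snd p) (fun s => dcirc r s)). apply continuous_snd. apply ccont_dcirc.
    - intros x Hx.
      assert (Hfar : r < Cmod (Cminus (RtoC x) a)) by (specialize (P2 i x Hi Hx); fold a in P2; lra).
      assert (HPx : Pl L (RtoC x) <> RtoC 0) by (apply Pl_nz; intros; apply Fxroot; auto).
      pose proof (cint_pow1_far a (RtoC x) r ltac:(lra) Hfar) as H1. unfold cint in H1.
      pose proof (cRI_scal (Copp (Cmult (Cpow (RtoC x) m) (Cinv (Pl L (RtoC x))))) _ _ _ _ H1) as H2.
      eapply cRI_eq; [eapply cRI_ext; [|exact H2]|].
      + intros t _. unfold K, Afun. cbv beta.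
        assert (Hne := Fxz' t x Hx).
        assert (Hne' : Cminus (circ a r t) (RtoC x) <> RtoC 0).
        { intro E. apply Hne. apply Cminus_0_eq in E. rewrite E. apply Cminus_diag. }
        change (Cpow (Cminus (circ a r t) (RtoC x)) 1) with (Cmult (Cminus (circ a r t) (RtoC x)) (RtoC 1)).
        match goal with |- @eq _ ?u ?v => change (@eq C u v) end.
        field. repeat split; auto.
      + apply injective_projections; simpl; ring. }
  set (dd := length L).
  assert (HS : CRI (fun t => Csum dd (fun k => Cmult (ak m L k) (Cmult (bet L k (circ a r t)) (dcirc r t)))) 0 (2 * PI)
                   (Csum dd (fun k => Cmult (ak m L k) (Cmult tpi (vres (dd - k) (skipn k L) a))))).
  { apply cRI_Csum. intros k Hk. apply cRI_scal.
    apply (cint_Pl (dd - k) (skipn k L) a r).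
    - rewrite length_skipn. reflexivity.
    - intro E. apply (f_equal (@length C)) in E. rewrite length_skipn in E. simpl in E. unfold dd in Hk. lia.
    - intros b Hb. apply Favoid. eapply In_skipn; eauto. }
  unfold cint. eapply cRI_eq; [eapply cRI_ext; [|exact (cRI_plus _ _ _ _ _ _ HPhi HS)]|].
  - intros t _. cbv beta.
    rewrite (decomp m n w N (circ a r t) (Fns t) (Fzb t)).
    2:{ intros b x Hb Hx. apply Fxroot; auto; lra. }
    fold L. fold dd.
    assert (EK : CRInt (fun x => K x t) 0 1 = Cmult (CRInt (fun x => Afun m L x (circ a r t)) 0 1) (dcirc r t)).
    { apply cRI_CRInt. apply (cRI_ext (fun x => Cmult (dcirc r t) (Afun m L x (circ a r t)))).
      { intros; unfold K; apply Cmult_comm. }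
      rewrite Cmult_comm. apply cRI_scal. apply CRInt_correct; [lra|].
      intros x Hx. apply ccont_Afun. intros; apply Fxroot; auto; lra. apply Fxz'; lra. }
    rewrite EK.
    assert (ES : Cmult (Csum dd (fun k => Cmult (ak m L k) (bet L k (circ a r t)))) (dcirc r t) =
                 Csum dd (fun k => Cmult (ak m L k) (Cmult (bet L k (circ a r t)) (dcirc r t)))).
    { rewrite Cmult_comm, <- Csum_scal. apply Csum_ext. intros; apply injective_projections; simpl; ring. }
    rewrite <- ES. symmetry. apply Cmult_plus_distr_r.
  - unfold cval. fold L. fold dd. rewrite <- Csum_scal.
    assert (E0 : forall u : C, Cplus (RtoC 0) u = u) by (intros; apply injective_projections; simpl; ring).
    rewrite E0. apply Csum_ext. intros k _. fold a. apply injective_projections; simpl; ring.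
Qed.


Lemma Csum_comm n K (f : nat -> nat -> C) :
  Csum n (fun i => Csum K (fun k => f i k)) = Csum K (fun k => Csum n (fun i => f i k)).
Proof.
  induction n as [|n IH]; simpl.
  - symmetry. apply Csum_zero.
  - rewrite IH. rewrite <- Csum_plus. reflexivity.
Qed.

Lemma Csum_sel K (a : nat -> C) : (1 <= K)%nat ->
  Csum K (fun k => Cmult (a k) (if Nat.eqb (K - k) 1 then RtoC 1 else RtoC 0)) = a (pred K).
Proof.
  intros HK. destruct K as [|K]; [lia|].
  set (f := fun k => Cmult (a k) (if Nat.eqb (S K - k) 1 then RtoC 1 else RtoC 0)).
  change (Csum (S K) f) with (Cplus (Csum K f) (f K)).
  rewrite (Csum_ext K f (fun _ => RtoC 0)).
  - rewrite Csum_zero. unfold f.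
    assert (E1 : Nat.eqb (S K - K) 1 = true) by (apply Nat.eqb_eq; lia).
    rewrite E1. simpl pred.
    generalize (a K). intro u. apply injective_projections; simpl; ring.
  - intros i Hi. unfold f.
    assert (E1 : Nat.eqb (S K - i) 1 = false) by (apply Nat.eqb_neq; lia).
    rewrite E1. generalize (a i). intro u. apply injective_projections; simpl; ring.
Qed.

Lemma tpi_nz : tpi <> RtoC 0.
Proof.
  intro E. apply (f_equal snd) in E. unfold tpi in E. simpl in E. pose proof PI_RGT_0. lra.
Qed.

Theorem theorem1 (n : nat) (w : nat -> C) (N : nat -> nat) (m : nat)
  (Hn : (1 <= n)%nat)
  (Hdist : forall i j, (i < n)%nat -> (j < n)%nat -> i <> j -> w i <> w j)
  (Hseg : forall i, (i < n)%nat -> ~ (Im (w i) = 0 /\ 0 <= Re (w i) <= 1))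
  (HN : forall i, (i < n)%nat -> (1 <= N i)%nat) :
  (forall i, (i < n)%nat -> exists c, is_residue (G_m m n w N) (w i) c) /\
  (forall c : nat -> C,
     (forall i, (i < n)%nat -> is_residue (G_m m n w N) (w i) (c i)) ->
     @is_RInt C_R_NormedModule
       (fun x : R => Cdiv (Cpow (RtoC x) m) (hpoly n w N (RtoC x)))
       0 1 (Csum n c)).
Proof.
  assert (Hseg' : forall i, (i < n)%nat -> ~ onseg (w i)) by exact Hseg.
  destruct (rho_exists n w Hdist Hseg') as [rho [Hrho [P1 P2]]].
  split.
  - intros i Hi. exists (cval m n w N i). exists rho. split; auto. intros r Hr.
    exact (main_circle n w N m rho Hdist Hseg' Hrho P1 P2 i Hi r Hr).
  - intros c Hc.
    assert (Ec : forall i, (i < n)%nat -> c i = cval m n w N i).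
    { intros i Hi. destruct (Hc i Hi) as [e [He Hint]].
      set (r := Rmin e rho / 2).
      assert (Hr1 : 0 < r < e) by (unfold r; pose proof (Rmin_l e rho); pose proof (Rmin_pos e rho He Hrho); lra).
      assert (Hr2 : 0 < r < rho) by (unfold r; pose proof (Rmin_r e rho); pose proof (Rmin_pos e rho He Hrho); lra).
      pose proof (Hint r Hr1) as I1.
      pose proof (main_circle n w N m rho Hdist Hseg' Hrho P1 P2 i Hi r Hr2) as I2. unfold cint in I2.
      assert (E := cRI_uniq _ _ _ _ _ I1 I2). fold tpi in E.
      assert (Htp := tpi_nz).
      replace (c i) with (Cmult (Cinv tpi) (Cmult tpi (c i))) by (field; auto).
      rewrite E. field. auto. }
    rewrite (Csum_ext n c (cval m n w N)) by exact Ec.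
    unfold cval. set (L := rootsl w N n). set (dd := length L).
    rewrite Csum_comm.
    assert (HL : L <> nil) by (apply rootsl_nonnil; auto).
    assert (Hdd : (1 <= dd)%nat) by (unfold dd; destruct L; [congruence|simpl; lia]).
    rewrite (Csum_ext dd _ (fun k => Cmult (ak m L k) (if Nat.eqb (dd - k) 1 then RtoC 1 else RtoC 0))).
    2:{ intros k Hk. rewrite Csum_scal. f_equal.
        apply (vres_sum n w Hdist (dd - k) (skipn k L)).
        - rewrite length_skipn. reflexivity.
        - intro E. apply (f_equal (@length C)) in E. rewrite length_skipn in E. simpl in E. lia.
        - intros b Hb. apply (rootsl_In w N n b). eapply In_skipn; eauto. }
    rewrite Csum_sel by auto.
    unfold ak. eapply cRI_ext; [|apply CRInt_correct; [lra|]].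
    + intros x _. unfold alf. replace (S (pred dd)) with dd by lia. unfold dd. rewrite firstn_all.
      unfold Cdiv. rewrite hpoly_Pl. reflexivity.
    + intros x Hx. apply ccont_alf. intros b Hb E.
      destruct (rootsl_In w N n b Hb) as [j [Hj ->]].
      specialize (P2 j x Hj ltac:(lra)). rewrite E, Cmod_0 in P2. lra.
Qed.
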